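(* Let $S$ be a strongly $E^*$-unitary inverse semigroup (with zero) and $R$ a commutative unital ring. Then $L_R(S)\cong A_R(\mathcal G_{\mathrm{tight}}(S))$, where $\mathcal G_{\mathrm{tight}}(S)$ is Exel's groupoid of tight representations (tight groupoid) of $S$ and $A_R$ denotes the Steinberg algebra over $R$.
   Context: $S$ is an inverse semigroup with zero, $s^*$ the unique inverse of $s$, $E$ its idempotents (a meet semilattice with $x\wedge y=xy$, least element $0$), $S^\times=S\setminus\{0\}$, $E^\times=E\setminus\{0\}$. A pure grading is a map $\varphi:S^\times\to G$ to a group with $\varphi(ab)=\varphi(a)\varphi(b)$ whenever $ab\ne0$ and $\varphi^{-1}(1_G)=E^\times$; $S$ is strongly $E^*$-unitary if it has one. For $g\in G$, $E_g=\{x\in E: x\le ss^*$ for some $s$ with $\varphi(s)=g\}$ if $\varphi^{-1}(g)\ne\emptyset$, else $\{0\}$. $\phi_g:E_{g^{-1}}\to E_g$, $x\mapsto sxs^*$ (any $s$ with $\varphi(s)=g$, $x\le s^*s$) is a meet-semilattice isomorphism. For a meet semilattice $P$ with $0$: a filter is a subset $F$, $\emptyset\ne F\ne P$, closed upwards and under meets; $F(P)$ has topology generated by $\{F:x\in F\}$; tight filters $T(P)$ are the closure of the ultrafilters; $V^P_{(x:x_1,\dots,x_n)}=\{\xi\in T(P):x\in\xi, x_i\notin\xi\}$; $\mathcal T_c(P)$ is the generalized Boolean algebra of compact open subsets of $T(P)$. $\mathcal T_c(E_g)$ is identified with the ideal of $\mathcal T_c(E)$ of compact open sets contained in $\bigcup_{x\in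 E_g}V^E_x$, and $\hat\phi_g:\mathcal T_c(E_{g^{-1}})\to\mathcal T_c(E_g)$ is the isomorphism induced by $\phi_g$ ($V_{(x:x_1,\dots,x_n)}\mapsto V_{(\phi_g(x):\phi_g(x_1),\dots,\phi_g(x_n))}$). $\Phi=(\{\mathcal T_c(E_g)\},\{\hat\phi_g\})$ is a partial action of $G$ on $\mathcal T_c(E)$. For a partial action $\Phi=(\{\mathcal I_t\},\{\phi_t\})$ on a generalized Boolean algebra $\mathcal B$ and commutative unital ring $R$: $\mathrm{Lc}(R,\mathcal B)$ is the $R$-algebra of functions $f:R\setminus\{0\}\to\mathcal B$ with pairwise disjoint values, almost all $0$, viewed as the function $\sum_r r1_{f(r)}$ (equivalently locally constant compactly supported $R$-valued functions on the Stone dual of $\mathcal B$); $\mathrm{Lc}(R,\mathcal B)\rtimes_\Phi G$ consists of finite sums $\sum_t f_t\delta_t$, $f_t\in\mathrm{Lc}(R,\mathcal I_t)$, with $(a\delta_s)(b\delta_t)=\tilde\phi_s(\tilde\phi_{s^{-1}}(a)b)\delta_{st}$, $\tilde\phi_t(f)=\phi_t\circ f$. $L_R(S,\varphi):=\mathrm{Lc}(R,\mathcal T_c(E))\rtimes_\Phi G$; up to isomorphism it does not depend on the pure grading, and is written $L_R(S)$. *)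

(* Defs.v *)
From HB Require Import structures.
From mathcomp Require Import all_boot all_algebra.
From Stdlib Require Import ClassicalEpsilon.
From Stdlib Require List.

Set Implicit Arguments.
Unset Strict Implicit.
Unset Printing Implicit Defensive.

Import GRing.Theory.
Local Open Scope ring_scope.

Record invsemigroup := InvSemigroup {
  isg_car :> Type;
  isg_mul : isg_car -> isg_car -> isg_car;
  isg_star : isg_car -> isg_car;
  isg_zero : isg_car;
  isg_mulA : forall a b c, isg_mul a (isg_mul b c) = isg_mul (isg_mul a b) c;
  isg_inv1 : forall s, isg_mul (isg_mul s (isg_star s)) s = s;
  isg_inv2 : forall s, isg_mul (isg_mul (isg_star s) s) (isg_star s) = isg_star s;
  isg_inv_uniq : forall s t, isg_mul (isg_mul s t) s = s ->
                   isg_mul (isg_mul t s) t = t -> t = isg_star s;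
  isg_mul0s : forall s, isg_mul isg_zero s = isg_zero;
  isg_muls0 : forall s, isg_mul s isg_zero = isg_zero }.

Record group := Group {
  grp_car :> Type;
  gmul : grp_car -> grp_car -> grp_car;
  gone : grp_car;
  ginv : grp_car -> grp_car;
  gmulA : forall a b c, gmul a (gmul b c) = gmul (gmul a b) c;
  gmul1l : forall a, gmul gone a = a;
  gmul1r : forall a, gmul a gone = a;
  gmulVl : forall a, gmul (ginv a) a = gone;
  gmulVr : forall a, gmul a (ginv a) = gone }.

(* Finitely supported sums over an arbitrary type (0 if the support is
   not finite; the chosen duplicate-free list covering the support does
   not matter). *)
Definition fsum {T : Type} {V : zmodType} (F : T -> V) : V :=
  match excluded_middle_informative
          (exists l : seq T, List.NoDup l /\ forall x, F x <> 0 -> List.In x l)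
  with
  | left H => \sum_(x <- proj1_sig (constructive_indefinite_description _ H)) F x
  | right _ => 0
  end.

Definition indic {T : Type} {R : pzRingType} (U : T -> Prop) (x : T) : R :=
  if excluded_middle_informative (U x) then 1 else 0.

Section Tight.
Variable S : invsemigroup.

Definition smul := @isg_mul S.
Definition sstar := @isg_star S.
Definition szero := @isg_zero S.

Definition idem (x : S) : Prop := smul x x = x.
Definition leE (x y : S) : Prop := smul x y = x.

(* subsets of E (predicates on S concentrated on E) *)
Definition Filt := S -> Prop.

Definition is_filter (F : Filt) : Prop :=
  (forall x, F x -> idem x) /\
  (exists x, F x) /\
  ~ (forall x, idem x -> F x) /\
  (forall x y, F x -> idem y -> leE x y -> F y) /\
  (forall x y, F x -> F y -> F (smul x y)).

Definition is_ultrafilter (F : Filt) : Prop :=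
  is_filter F /\
  forall F', is_filter F' -> (forall x, F x -> F' x) -> forall x, F' x -> F x.

Definition in_basic (xs ys : seq S) (F : Filt) : Prop :=
  (forall x, List.In x xs -> F x) /\ (forall y, List.In y ys -> ~ F y).

Definition idem_list (l : seq S) : Prop := forall x, List.In x l -> idem x.

(* tight filters = closure of the ultrafilters in F(E) *)
Definition is_tight (F : Filt) : Prop :=
  is_filter F /\
  forall xs ys, idem_list xs -> idem_list ys -> in_basic xs ys F ->
    exists U, is_ultrafilter U /\ in_basic xs ys U.

(* topology of T(E) (subspace topology) *)
Definition tset := Filt -> Prop.

Definition topen (O : tset) : Prop :=
  (forall xi, O xi -> is_tight xi) /\
  forall xi, O xi -> exists xs ys, idem_list xs /\ idem_list ys /\
    in_basic xs ys xi /\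
    forall eta, is_tight eta -> in_basic xs ys eta -> O eta.

Definition tcompact (K : tset) : Prop :=
  forall C : tset -> Prop,
    (forall O, C O -> topen O) ->
    (forall xi, K xi -> exists O, C O /\ O xi) ->
    exists l : seq tset, (forall O, List.In O l -> C O) /\
      forall xi, K xi -> exists O, List.In O l /\ O xi.

Definition Tc (U : tset) : Prop := topen U /\ tcompact U.

Definition isgerm (p : S * Filt) : Prop :=
  is_tight p.2 /\ p.2 (smul (sstar p.1) p.1).

Definition germ_eq (p q : S * Filt) : Prop :=
  p.2 = q.2 /\ exists e, p.2 e /\ smul p.1 e = smul q.1 e.

Definition germ : Type :=
  { P : S * Filt -> Prop |
      exists p, isgerm p /\ P = (fun q => isgerm q /\ germ_eq p q) }.

Definition thetas (s : S) (xi : Filt) : Filt := fun y =>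
  idem y /\ exists x, xi x /\ leE x (smul (sstar s) s) /\
                      leE (smul (smul s x) (sstar s)) y.

Definition gsrc (g : germ) (xi : Filt) : Prop := exists s, sval g (s, xi).
Definition grng (g : germ) (eta : Filt) : Prop :=
  exists s xi, sval g (s, xi) /\ eta = thetas s xi.

Definition gprod (a b c : germ) : Prop :=
  exists s t eta, sval b (t, eta) /\ sval a (s, thetas t eta) /\
                  sval c (smul s t, eta).

Definition Theta (s : S) (U : tset) : germ -> Prop :=
  fun g => exists xi, U xi /\ sval g (s, xi).

Definition gopen (O : germ -> Prop) : Prop :=
  forall g, O g -> exists s U, topen U /\
    (forall xi, U xi -> xi (smul (sstar s) s)) /\
    Theta s U g /\ forall h, Theta s U h -> O h.

Definition gcompact (K : germ -> Prop) : Prop :=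
  forall C : (germ -> Prop) -> Prop,
    (forall O, C O -> gopen O) ->
    (forall g, K g -> exists O, C O /\ O g) ->
    exists l : seq (germ -> Prop), (forall O, List.In O l -> C O) /\
      forall g, K g -> exists O, List.In O l /\ O g.

Definition bisection (B : germ -> Prop) : Prop :=
  forall a b, B a -> B b ->
    ((exists xi, gsrc a xi /\ gsrc b xi) \/ (exists eta, grng a eta /\ grng b eta)) ->
    a = b.

Definition compact_open_bisection (B : germ -> Prop) : Prop :=
  gopen B /\ gcompact B /\ bisection B.

Section Steinberg.
Variable R : comPzRingType.

Definition inSteinberg (f : germ -> R) : Prop :=
  exists l : seq (R * (germ -> Prop)),
    (forall p, List.In p l -> compact_open_bisection p.2) /\
    f = (fun g => \sum_(p <- l) p.1 * indic p.2 g).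

Definition Aadd (f h : germ -> R) : germ -> R := fun g => f g + h g.
Definition Ascale (r : R) (f : germ -> R) : germ -> R := fun g => r * f g.
Definition Aconv (f h : germ -> R) : germ -> R := fun c =>
  fsum (fun p : germ * germ =>
          if excluded_middle_informative (gprod p.1 p.2 c)
          then f p.1 * h p.2 else 0).
End Steinberg.

Section Grading.
Variables (G : group) (phi : S -> G).

Definition pure_grading : Prop :=
  (forall a b, smul a b <> szero -> phi (smul a b) = gmul (phi a) (phi b)) /\
  (forall s, s <> szero -> (phi s = @gone G <-> idem s)).

Definition Eg (g : G) (x : S) : Prop :=
  idem x /\
  ((exists s, s <> szero /\ phi s = g /\ leE x (smul s (sstar s))) \/
   ((forall s, s <> szero -> phi s <> g) /\ x = szero)).

Definition Dg (g : G) (xi : Filt) : Prop := is_tight xi /\ exists x, Eg g x /\ xi x.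

(* T_c(E_g) as an ideal of T_c(E) *)
Definition TcI (g : G) (U : tset) : Prop := Tc U /\ forall xi, U xi -> Dg g xi.

(* the homeomorphism D_{g^-1} -> D_g induced by phi_g : E_{g^-1} -> E_g,
   phi_g(x) = s x s^* for s with phi(s) = g and x <= s^* s *)
Definition theta (g : G) (xi : Filt) : Filt := fun y =>
  idem y /\ exists s x, s <> szero /\ phi s = g /\ xi x /\
     leE x (smul (sstar s) s) /\ leE (smul (smul s x) (sstar s)) y.

Section Skew.
Variable R : comPzRingType.

(* Lc(R, T_c(E_g)), as functions on T(E) (extended by 0) *)
Definition inLc (g : G) (f : Filt -> R) : Prop :=
  exists l : seq (R * tset),
    uniq (map fst l) /\
    (forall p, List.In p l -> p.1 != 0 /\ TcI g p.2) /\
    (forall i j, (i < j < size l)%N ->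
       forall xi, (nth (0, fun _ => False) l i).2 xi ->
                  ~ (nth (0, fun _ => False) l j).2 xi) /\
    f = (fun xi => \sum_(p <- l) p.1 * indic p.2 xi).

Definition act (g : G) (f : Filt -> R) : Filt -> R := fun xi =>
  if excluded_middle_informative (Dg g xi) then f (theta (ginv g) xi) else 0.

(* elements sum_t f_t delta_t of Lc(R,T_c(E)) x|_Phi G *)
Definition inL (a : G -> Filt -> R) : Prop :=
  (exists l : seq G, forall t, ~ List.In t l -> a t = (fun _ => 0)) /\
  forall t, inLc t (a t).

Definition Ladd (a b : G -> Filt -> R) : G -> Filt -> R :=
  fun t xi => a t xi + b t xi.
Definition Lscale (r : R) (a : G -> Filt -> R) : G -> Filt -> R :=
  fun t xi => r * a t xi.
(* (a delta_s)(b delta_t) = tilde phi_s(tilde phi_{s^-1}(a) b) delta_{st} *)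
Definition Lmul (a b : G -> Filt -> R) : G -> Filt -> R := fun u xi =>
  fsum (fun p : G * G =>
          if excluded_middle_informative (gmul p.1 p.2 = u)
          then act p.1 (fun eta => act (ginv p.1) (a p.1) eta * b p.2 eta) xi
          else 0).
End Skew.
End Grading.
End Tight.

(* Main.v *)
Require Import Defs.
From mathcomp Require Import all_boot all_algebra.
From Stdlib Require Import ClassicalEpsilon FunctionalExtensionality PropExtensionality Classical ProofIrrelevance.
From Stdlib Require List Permutation.
Set Implicit Arguments.
Unset Strict Implicit.
Unset Printing Implicit Defensive.


Section Alg.
Variable S : invsemigroup.
Local Notation "a ** b" := (@smul S a b) (at level 40, left associativity).
Local Notation "s ^*" := (@sstar S s).
Local Notation z := (@szero S).

Lemma mA (a b c : S) : a ** (b ** c) = a ** b ** c.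
Proof. exact: isg_mulA. Qed.
Lemma i1 (s : S) : s ** s^* ** s = s. Proof. exact: isg_inv1. Qed.
Lemma i2 (s : S) : s^* ** s ** s^* = s^*. Proof. exact: isg_inv2. Qed.
Lemma iu (s t : S) : s ** t ** s = s -> t ** s ** t = t -> t = s^*.
Proof. exact: isg_inv_uniq. Qed.
Lemma m0s (s : S) : z ** s = z. Proof. exact: isg_mul0s. Qed.
Lemma ms0 (s : S) : s ** z = z. Proof. exact: isg_muls0. Qed.

Lemma starK (s : S) : s^*^* = s.
Proof. symmetry; apply: iu; [exact: i2 | exact: i1]. Qed.

Lemma idem_star (e : S) : idem e -> e^* = e.
Proof. move=> he; symmetry; apply: iu; rewrite /idem in he; rewrite he he //. Qed.

Lemma idemM (e f : S) : idem e -> idem f -> idem (e ** f).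
Proof.
rewrite /idem => he hf.
set x := (e ** f)^*.
have hx : f ** x ** e = x.
  apply: iu.
  - have -> : e ** f ** (f ** x ** e) ** (e ** f) = e ** (f ** f) ** x ** (e ** e) ** f.
      by rewrite !mA.
    rewrite hf he /x.
    have -> : e ** f ** (e ** f)^* ** e ** f = (e ** f) ** (e ** f)^* ** (e ** f) by rewrite !mA.
    by rewrite i1.
  - have -> : f ** x ** e ** (e ** f) ** (f ** x ** e) = f ** x ** (e ** e) ** (f ** f) ** x ** e.
      by rewrite !mA.
    rewrite he hf.
    have -> : f ** x ** e ** f ** x ** e = f ** (x ** (e ** f) ** x) ** e by rewrite !mA.
    by rewrite /x i2.
have xid : x ** x = x.
  rewrite -{1}hx -{2}hx.
  have -> : f ** x ** e ** (f ** x ** e) = f ** (x ** (e ** f) ** x) ** e by rewrite !mA.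
  by rewrite /x i2.
by rewrite -(starK (e ** f)) -/x (idem_star xid).
Qed.

Lemma idem_comm (e f : S) : idem e -> idem f -> e ** f = f ** e.
Proof.
move=> he hf.
have ef := idemM he hf; have fe := idemM hf he.
rewrite /idem in he hf ef fe.
rewrite -{1}(idem_star ef); symmetry; apply: iu.
- have -> : e ** f ** (f ** e) ** (e ** f) = e ** (f ** f) ** (e ** e) ** f by rewrite !mA.
  by rewrite hf he -mA ef.
- have -> : f ** e ** (e ** f) ** (f ** e) = f ** (e ** e) ** (f ** f) ** e by rewrite !mA.
  by rewrite hf he -mA fe.
Qed.

Lemma star_mul (a b : S) : (a ** b)^* = b^* ** a^*.
Proof.
have h1 : idem (b ** b^*) by rewrite /idem mA i1.
have h2 : idem (a^* ** a) by rewrite /idem mA i2.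
symmetry; apply: iu.
- have -> : a ** b ** (b^* ** a^*) ** (a ** b) = a ** ((b ** b^*) ** (a^* ** a)) ** b by rewrite !mA.
  rewrite (idem_comm h1 h2).
  have -> : a ** (a^* ** a ** (b ** b^*)) ** b = (a ** a^* ** a) ** (b ** b^* ** b) by rewrite !mA.
  by rewrite !i1.
- have -> : b^* ** a^* ** (a ** b) ** (b^* ** a^*) = b^* ** ((a^* ** a) ** (b ** b^*)) ** a^* by rewrite !mA.
  rewrite -(idem_comm h1 h2).
  have -> : b^* ** (b ** b^* ** (a^* ** a)) ** a^* = (b^* ** b ** b^*) ** (a^* ** a ** a^*) by rewrite !mA.
  by rewrite !i2.
Qed.

Lemma idemR (s : S) : idem (s ** s^*). Proof. by rewrite /idem mA i1. Qed.
Lemma idemL (s : S) : idem (s^* ** s). Proof. by rewrite /idem mA i2. Qed.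
Lemma idem0 : idem z. Proof. by rewrite /idem m0s. Qed.

Lemma idem_conj (s e : S) : idem e -> idem (s ** e ** s^*).
Proof.
move=> he; rewrite /idem.
have -> : s ** e ** s^* ** (s ** e ** s^*) = s ** (e ** (s^* ** s)) ** e ** s^* by rewrite !mA.
rewrite (idem_comm he (idemL s)).
have -> : s ** (s^* ** s ** e) ** e ** s^* = s ** s^* ** s ** (e ** e) ** s^* by rewrite !mA.
by rewrite i1 he.
Qed.

Lemma leE_trans (x y w : S) : leE x y -> leE y w -> leE x w.
Proof. rewrite /leE => h1 h2. by rewrite -h1 -mA h2. Qed.

Lemma leE_refl (x : S) : idem x -> leE x x. Proof. done. Qed.

Lemma leE_mull (x y : S) : idem x -> idem y -> leE (x ** y) y.
Proof. rewrite /leE => hx hy. by rewrite -mA hy. Qed.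
Lemma leE_mulr (x y : S) : idem x -> idem y -> leE (x ** y) x.
Proof. move=> hx hy; rewrite (idem_comm hx hy); exact: leE_mull. Qed.

Lemma leE_meet (x y w : S) : idem x -> idem y -> leE w x -> leE w y -> leE w (x ** y).
Proof. rewrite /leE => _ _ h1 h2. by rewrite mA h1 h2. Qed.

Lemma leE0 (x : S) : leE z x. Proof. by rewrite /leE m0s. Qed.
End Alg.


Lemma predext (T : Type) (P Q : T -> Prop) : (forall x, P x <-> Q x) -> P = Q.
Proof. move=> h; apply functional_extensionality => x; apply propositional_extensionality; exact: h. Qed.

Section Filters.
Variable S : invsemigroup.
Local Notation "a ** b" := (@smul S a b) (at level 40, left associativity).
Local Notation "s ^*" := (@sstar S s).
Local Notation z := (@szero S).

Lemma filt_idem (F : Filt S) x : is_filter F -> F x -> idem x.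
Proof. by move=> [h _] /h. Qed.
Lemma filt_up (F : Filt S) x y : is_filter F -> F x -> idem y -> leE x y -> F y.
Proof. by case=> _ [_ [_ [h _]]]; apply: h. Qed.
Lemma filt_meet (F : Filt S) x y : is_filter F -> F x -> F y -> F (x ** y).
Proof. by case=> _ [_ [_ [_ h]]]; apply: h. Qed.
Lemma filt_no0 (F : Filt S) : is_filter F -> ~ F z.
Proof.
move=> hF h0; case: (hF) => _ [_ [hn _]]; apply: hn => x hx.
by apply: (filt_up hF h0 hx); apply: leE0.
Qed.
Lemma filt_ne0 (F : Filt S) x : is_filter F -> F x -> x <> z.
Proof. by move=> hF hx e; apply: (filt_no0 hF); rewrite -e. Qed.

Definition cj (s y : S) := s^* ** y ** s.

Lemma idem_cj s y : idem y -> idem (cj s y).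
Proof. move=> hy; rewrite /cj -{2}(starK s); exact: idem_conj. Qed.

Lemma cj_le s x y : idem x -> idem y -> leE x y -> leE (cj s x) (cj s y).
Proof.
rewrite /cj /leE => hx hy hxy.
have hc : idem (s ** s^*) by apply: idemR.
have -> : s^* ** x ** s ** (s^* ** y ** s) = s^* ** (x ** (s ** s^*)) ** y ** s by rewrite !mA.
rewrite (idem_comm hx hc).
have -> : s^* ** (s ** s^* ** x) ** y ** s = (s^* ** s ** s^*) ** (x ** y) ** s by rewrite !mA.
by rewrite i2 hxy.
Qed.

Lemma cj_meet s x y : idem x -> idem y -> cj s (x ** y) = cj s x ** cj s y.
Proof.
rewrite /cj => hx hy.
have hc : idem (s ** s^*) by apply: idemR.
have -> : s^* ** x ** s ** (s^* ** y ** s) = s^* ** (x ** (s ** s^*)) ** y ** s by rewrite !mA.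
rewrite (idem_comm hx hc).
have -> : s^* ** (s ** s^* ** x) ** y ** s = (s^* ** s ** s^*) ** (x ** y) ** s by rewrite !mA.
by rewrite i2 !mA.
Qed.

Lemma cj_cj s y : idem y -> cj s (cj (s^*) y) = (s^* ** s) ** y ** (s^* ** s).
Proof. move=> hy; rewrite /cj starK !mA. done. Qed.

Lemma sandwich (e y : S) : idem e -> idem y -> e ** y ** e = y ** e.
Proof. move=> he hy. by rewrite (idem_comm he hy) -mA he. Qed.

Lemma thetasP (s : S) (xi : Filt S) y : is_filter xi -> xi (s^* ** s) ->
  thetas s xi y <-> idem y /\ xi (cj s y).
Proof.
move=> hF hs; split.
- case=> hy [x [hx [hxs hxy]]]; split => //.
  have hxi := filt_idem hF hx.
  apply: (filt_up hF hx); first exact: idem_cj.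
  rewrite /leE /cj.
  have hL : idem (s^* ** s) by apply: idemL.
  rewrite /leE in hxs hxy.
  have e1 : x = s^* ** s ** x by rewrite (idem_comm hL hxi).
  rewrite {1}e1.
  have -> : s^* ** s ** x ** (s^* ** y ** s) = s^* ** (s ** x ** s^* ** y) ** s by rewrite !mA.
  rewrite hxy.
  have -> : s^* ** (s ** x ** s^*) ** s = (s^* ** s) ** x ** (s^* ** s) by rewrite !mA.
  by rewrite sandwich.
- case=> hy hc; split => //.
  exists (cj s y); split => //; split.
  + rewrite /leE /cj.
    have -> : s^* ** y ** s ** (s^* ** s) = s^* ** y ** (s ** s^* ** s) by rewrite !mA.
    by rewrite i1.
  + rewrite /leE /cj.
    have hR : idem (s ** s^*) by apply: idemR.
    have -> : s ** (s^* ** y ** s) ** s^* = (s ** s^*) ** y ** (s ** s^*) by rewrite !mA.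
    rewrite sandwich //. by rewrite -mA (idem_comm hR hy) mA hy.
Qed.

Lemma thetas_filter (s : S) (xi : Filt S) : is_filter xi -> xi (s^* ** s) ->
  is_filter (thetas s xi).
Proof.
move=> hF hs; split; [|split; [|split; [|split]]].
- by move=> x [].
- exists (s ** s^*); apply/thetasP => //; split; first exact: idemR.
  by rewrite /cj mA i2.
- move=> h; have := h z (@idem0 S); move/(thetasP _ hF hs)=> [_].
  by rewrite /cj ms0 m0s; apply: filt_no0.
- move=> x y /(thetasP _ hF hs) [hx hcx] hy hxy; apply/thetasP => //; split => //.
  by apply: (filt_up hF hcx); [apply: idem_cj | apply: cj_le].
- move=> x y /(thetasP _ hF hs) [hx hcx] /(thetasP _ hF hs) [hy hcy]; apply/thetasP => //.
  split; first exact: idemM.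
  by rewrite cj_meet //; apply: filt_meet.
Qed.

Lemma thetas_src (s : S) (xi : Filt S) : is_filter xi -> xi (s^* ** s) ->
  thetas s xi (s ** s^*).
Proof.
move=> hF hs; apply/thetasP => //; split; first exact: idemR.
by rewrite /cj mA i2.
Qed.

Lemma thetas_inv (s : S) (xi : Filt S) : is_filter xi -> xi (s^* ** s) ->
  thetas (s^*) (thetas s xi) = xi.
Proof.
move=> hF hs; apply: predext => y.
have hT := thetas_filter hF hs.
have hs' : thetas s xi (s^*^* ** s^*) by rewrite starK; apply: thetas_src.
rewrite (thetasP _ hT hs') (thetasP _ hF hs).
split.
- case=> hy [_ h]. rewrite /cj starK in h.
  have h2 : s^* ** (s ** y ** s^*) ** s = s^* ** s ** y ** (s^* ** s) by rewrite !mA.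
  rewrite h2 in h.
  have hL : idem (s^* ** s) by apply: idemL.
  have h3 : s^* ** s ** y ** (s^* ** s) = y ** (s^* ** s) by rewrite sandwich.
  rewrite h3 in h.
  apply: (filt_up hF h hy); exact: leE_mulr.
- move=> hy; have hyi := filt_idem hF hy; split => //.
  have hc : idem (cj (s^*) y) by apply: idem_cj.
  split => //.
  rewrite /cj starK.
  have h2 : s^* ** (s ** y ** s^*) ** s = s^* ** s ** y ** (s^* ** s) by rewrite !mA.
  rewrite h2.
  have hL : idem (s^* ** s) by apply: idemL.
  rewrite sandwich //; exact: filt_meet.
Qed.

Lemma thetas_mono (s : S) (F F' : Filt S) : (forall x, F x -> F' x) ->
  forall y, thetas s F y -> thetas s F' y.
Proof. move=> h y [hy [x [hx rest]]]; split => //; exists x; split => //; exact: h. Qed.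

Lemma thetas_ultra (s : S) (U : Filt S) : is_ultrafilter U -> U (s^* ** s) ->
  is_ultrafilter (thetas s U).
Proof.
move=> [hF hmax] hs; split; first exact: thetas_filter.
move=> F' hF' hsub x hx.
have hss : F' (s^*^* ** s^*) by rewrite starK; apply: hsub; apply: thetas_src.
have hT' := thetas_filter hF' hss.
have hsub2 : forall y, U y -> thetas (s^*) F' y.
  move=> y hy; rewrite -(thetas_inv hF hs) in hy.
  by apply: (thetas_mono hsub).
have := hmax _ hT' hsub2.
move=> hback.
have e := thetas_inv hF' hss; rewrite starK in e.
rewrite -e in hx.
apply: (thetas_mono _ hx) => y hy; exact: hback.
Qed.
End Filters.


Section Tight.
Variable S : invsemigroup.
Local Notation "a ** b" := (@smul S a b) (at level 40, left associativity).
Local Notation "s ^*" := (@sstar S s).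
Local Notation z := (@szero S).

Lemma idem_list_map (s : S) l : idem_list l -> idem_list (map (cj s) l).
Proof.
move=> h x /List.in_map_iff [y [<- hy]]; apply: idem_cj; exact: h.
Qed.

Lemma in_basic_thetas (s : S) (F : Filt S) xs ys : is_filter F -> F (s^* ** s) ->
  idem_list xs -> idem_list ys ->
  (in_basic xs ys (thetas s F) <-> in_basic (map (cj s) xs) (map (cj s) ys) F).
Proof.
move=> hF hs hxs hys; split.
- case=> h1 h2; split.
  + move=> x /List.in_map_iff [y [<- hy]].
    by have /(thetasP _ hF hs) [] := h1 _ hy.
  + move=> x /List.in_map_iff [y [<- hy]] hc; apply: (h2 _ hy).
    by apply/(thetasP _ hF hs); split => //; apply: hys.
- case=> h1 h2; split.
  + move=> x hx; apply/(thetasP _ hF hs); split; first exact: hxs.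
    by apply: h1; apply: List.in_map.
  + move=> x hx /(thetasP _ hF hs) [_ hc]; apply: (h2 (cj s x)) => //.
    exact: List.in_map.
Qed.

Lemma tight_filter (F : Filt S) : is_tight F -> is_filter F.
Proof. by case. Qed.

Lemma thetas_tight (s : S) (xi : Filt S) : is_tight xi -> xi (s^* ** s) ->
  is_tight (thetas s xi).
Proof.
move=> [hF ht] hs; split; first exact: thetas_filter.
move=> xs ys hxs hys hb.
have hb' := (in_basic_thetas hF hs hxs hys).1 hb.
have hxs' : idem_list (s^* ** s :: map (cj s) xs).
  move=> x hx; case: hx => [<-|hx]; first exact: idemL. by apply: (idem_list_map (s:=s) hxs); exact hx.
have hb2 : in_basic (s^* ** s :: map (cj s) xs) (map (cj s) ys) xi.
  split; last exact: hb'.2.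
  by move=> x [<-|hx]; [exact: hs | exact: hb'.1].
have [U [hU hUb]] := ht _ _ hxs' (idem_list_map (s:=s) hys) hb2.
have hUs : U (s^* ** s) by apply: hUb.1; left.
exists (thetas s U); split; first exact: thetas_ultra.
apply/(in_basic_thetas hU.1 hUs hxs hys); split.
- by move=> x hx; apply: hUb.1; right.
- exact: hUb.2.
Qed.
End Tight.


Section Grp.
Variable G : group.
Local Notation "a * b" := (@gmul G a b).
Local Notation "1" := (@gone G).
Local Notation inv := (@ginv G).
Lemma gA (a b c : G) : a * (b * c) = a * b * c. Proof. exact: gmulA. Qed.
Lemma g1l (a : G) : 1 * a = a. Proof. exact: gmul1l. Qed.
Lemma g1r (a : G) : a * 1 = a. Proof. exact: gmul1r. Qed.
Lemma gVl (a : G) : inv a * a = 1. Proof. exact: gmulVl. Qed.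
Lemma gVr (a : G) : a * inv a = 1. Proof. exact: gmulVr. Qed.
Lemma gKl (a b : G) : inv a * (a * b) = b. Proof. by rewrite gA gVl g1l. Qed.
Lemma gKr (a b : G) : a * (inv a * b) = b. Proof. by rewrite gA gVr g1l. Qed.
Lemma g_inv_uniq (a b : G) : a * b = 1 -> a = inv b.
Proof. move=> h. by rewrite -(g1r a) -(gVr b) gA h g1l. Qed.
Lemma ginvK (a : G) : inv (inv a) = a.
Proof. symmetry; apply: g_inv_uniq; exact: gVr. Qed.
Lemma ginv_mul (a b : G) : inv (a * b) = inv b * inv a.
Proof. symmetry; apply: g_inv_uniq. by rewrite gA -(gA _ (inv a)) gVl g1r gVl. Qed.
Lemma gcancl (a b c : G) : a * b = a * c -> b = c.
Proof. move=> h. by rewrite -(gKl a b) h gKl. Qed.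
End Grp.

Section Germs.
Variable S : invsemigroup.
Local Notation "a ** b" := (@smul S a b) (at level 40, left associativity).
Local Notation "s ^*" := (@sstar S s).
Local Notation z := (@szero S).

Lemma germ_eq_refl (p : S * Filt S) : isgerm p -> germ_eq p p.
Proof. case=> ht hs; split => //; by exists (p.1^* ** p.1). Qed.
Lemma germ_eq_sym (p q : S * Filt S) : germ_eq p q -> germ_eq q p.
Proof. case=> e [x [hx hm]]; split => //; exists x; by rewrite -e. Qed.
Lemma germ_eq_trans (p q r : S * Filt S) : isgerm p -> germ_eq p q -> germ_eq q r -> germ_eq p r.
Proof.
move=> [ht _] [e1 [x [hx h1]]] [e2 [y [hy h2]]]; split; first by rewrite e1.
have hF := tight_filter ht.
have hyp : p.2 y by rewrite e1.
exists (x ** y); split; first exact: filt_meet.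
rewrite !mA h1 -!mA.
have hxi := filt_idem hF hx; have hyi := filt_idem hF hyp.
by rewrite (idem_comm hxi hyi) !mA h2 -!mA (idem_comm hyi hxi).
Qed.

Definition gclass (p : S * Filt S) := fun q => isgerm q /\ germ_eq p q.

Definition mkg (p : S * Filt S) (h : isgerm p) : germ S :=
  exist _ (gclass p) (ex_intro _ p (conj h erefl)).

Lemma mkg_mem p (h : isgerm p) : sval (mkg h) p.
Proof. split => //; exact: germ_eq_refl. Qed.

Lemma germ_rep (g : germ S) : exists p, sval g p.
Proof.
case: g => P [p [hp E]] /=; exists p; rewrite E; split => //; exact: germ_eq_refl.
Qed.

Lemma germ_mem_isgerm (g : germ S) p : sval g p -> isgerm p.
Proof. case: g => P [q [hq E]] /=; rewrite E; case => //. Qed.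

Lemma germ_mem_eq (g : germ S) p q : sval g p -> sval g q -> germ_eq p q.
Proof.
case: g => P [r [hr E]] /=; rewrite E => -[hp e1] [hq e2].
apply: (germ_eq_trans hp (germ_eq_sym e1) e2).
Qed.

Lemma germ_memP (g : germ S) p q : sval g p -> (sval g q <-> isgerm q /\ germ_eq p q).
Proof.
case: g => P [r [hr E]] /=; rewrite E => -[hp e1]; split.
- case=> hq e2; split => //; exact: (germ_eq_trans hp (germ_eq_sym e1) e2).
- case=> hq e2; split => //; exact: (germ_eq_trans hr e1 e2).
Qed.

Lemma germ_ext (g g' : germ S) p : sval g p -> sval g' p -> g = g'.
Proof.
move=> h1 h2; apply: eq_sig_hprop; first by move=> ? ? ?; apply: proof_irrelevance.
apply: predext => q.
rewrite (germ_memP _ h1) (germ_memP _ h2) //.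
Qed.

Lemma germ_ext2 (g g' : germ S) p q : sval g p -> sval g' q -> germ_eq p q -> g = g'.
Proof.
move=> h1 h2 e; apply: (germ_ext h1).
apply/(germ_memP _ h2); split; first exact: (germ_mem_isgerm h1).
apply: germ_eq_sym => //.
Qed.

Definition rep (g : germ S) : S * Filt S :=
  proj1_sig (constructive_indefinite_description _ (germ_rep g)).
Lemma rep_mem (g : germ S) : sval g (rep g).
Proof. rewrite /rep; case: constructive_indefinite_description => //. Qed.

Definition src (g : germ S) : Filt S := (rep g).2.
Definition rng (g : germ S) : Filt S := thetas (rep g).1 (rep g).2.

Lemma germ_ne0 (p : S * Filt S) : isgerm p -> p.1 <> z.
Proof.
case=> ht hs e; rewrite e ms0 in hs; exact: (filt_no0 (tight_filter ht) hs).
Qed.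

Lemma filt_sand (F : Filt S) e w : is_filter F -> F e -> idem w -> (F w <-> F (e ** w ** e)).
Proof.
move=> hF he hw; have hei := filt_idem hF he.
rewrite (idem_comm hei hw) -mA hei; split.
- by move=> h; apply: filt_meet.
- by move=> h; apply: (filt_up hF h hw); apply: leE_mulr.
Qed.

Lemma germ_eq_thetas (p q : S * Filt S) : isgerm p -> isgerm q -> germ_eq p q -> thetas p.1 p.2 = thetas q.1 q.2.
Proof.
case: p => s xi; case: q => t xi'; move=> [ht hs] [ht' hs'] [/= e0 [e [he hse]]] /=.
rewrite /= in hs ht; rewrite /= -e0 in hs' ht' *.
have hF := tight_filter ht.
have hei := filt_idem hF he.
apply: predext => y.
rewrite (thetasP _ hF hs) (thetasP _ hF hs'); split; case=> hy h; split => //.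
- rewrite /cj in h *.
  have hc1 : idem (s^* ** y ** s) by apply: (@idem_cj S s y hy).
  have hc2 : idem (t^* ** y ** t) by apply: (@idem_cj S t y hy).
  apply/(filt_sand hF he hc2); move/(filt_sand hF he hc1): h.
  have E : forall u, e ** (u^* ** y ** u) ** e = (u ** e)^* ** y ** (u ** e).
    by move=> u; rewrite star_mul (idem_star hei) !mA.
  by rewrite !E hse.
- rewrite /cj in h *.
  have hc1 : idem (s^* ** y ** s) by apply: (@idem_cj S s y hy).
  have hc2 : idem (t^* ** y ** t) by apply: (@idem_cj S t y hy).
  apply/(filt_sand hF he hc1); move/(filt_sand hF he hc2): h.
  have E : forall u, e ** (u^* ** y ** u) ** e = (u ** e)^* ** y ** (u ** e).
    by move=> u; rewrite star_mul (idem_star hei) !mA.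
  by rewrite !E hse.
Qed.

Lemma src_mem (g : germ S) p : sval g p -> src g = p.2.
Proof. move=> h; have [e _] := germ_mem_eq (rep_mem g) h; exact: e. Qed.

Lemma rng_mem (g : germ S) p : sval g p -> rng g = thetas p.1 p.2.
Proof.
move=> h; apply: germ_eq_thetas; [exact: germ_mem_isgerm (rep_mem g) | exact: germ_mem_isgerm h |].
exact: germ_mem_eq (rep_mem g) h.
Qed.

Lemma rng_tight (g : germ S) : is_tight (rng g).
Proof.
have [ht hs] := germ_mem_isgerm (rep_mem g); exact: thetas_tight.
Qed.
Lemma src_tight (g : germ S) : is_tight (src g).
Proof. by have [ht hs] := germ_mem_isgerm (rep_mem g). Qed.
End Germs.


Section Grading.
Variable S : invsemigroup.
Variable G : group.
Variable phi : S -> G.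
Hypothesis hphi : pure_grading phi.
Local Notation "a ** b" := (@smul S a b) (at level 40, left associativity).
Local Notation "s ^*" := (@sstar S s).
Local Notation z := (@szero S).
Local Notation "a * b" := (@gmul G a b).
Local Notation "1" := (@gone G).
Local Notation inv := (@ginv G).

Lemma phiM a b : a ** b <> z -> phi (a ** b) = phi a * phi b.
Proof. by case: hphi => h _; apply: h. Qed.
Lemma phiE e : e <> z -> idem e -> phi e = 1.
Proof. by case: hphi => _ h he hi; apply/h. Qed.
Lemma phi1 s : s <> z -> phi s = 1 -> idem s.
Proof. by case: hphi => _ h hs hi; apply/h. Qed.

Lemma ne0_L s : s <> z -> s^* ** s <> z.
Proof. move=> hs e; apply: hs; by rewrite -(i1 s) -mA e ms0. Qed.
Lemma ne0_R s : s <> z -> s ** s^* <> z.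
Proof. move=> hs e; apply: hs; by rewrite -(i1 s) e m0s. Qed.
Lemma ne0_star s : s <> z -> s^* <> z.
Proof. move=> hs e; apply: (ne0_L hs); by rewrite e m0s. Qed.

Lemma phi_star s : s <> z -> phi (s^*) = inv (phi s).
Proof.
move=> hs; apply: g_inv_uniq; rewrite -phiM; last exact: ne0_L.
apply: phiE; [exact: ne0_L | exact: idemL].
Qed.

Lemma phi_mule s e : s ** e <> z -> e <> z -> idem e -> phi (s ** e) = phi s.
Proof. move=> h he hi; by rewrite (phiM h) (phiE he hi) g1r. Qed.

Lemma germ_eq_phi (p q : S * Filt S) : isgerm p -> germ_eq p q -> phi p.1 = phi q.1.
Proof.
case: p => s xi; case: q => t xi'; move=> [ht hs] [/= e0 [e [he hse]]] /=.
rewrite /= in hs ht he.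
have hF := tight_filter ht; have hei := filt_idem hF he.
have hne : e <> z by apply: (filt_ne0 hF he).
have hse0 : s ** e <> z.
  move=> E; apply: (filt_no0 hF).
  have : xi (s^* ** s ** e) by apply: filt_meet.
  by rewrite -mA E ms0.
by rewrite -(phi_mule hse0 hne hei) hse phi_mule // -hse.
Qed.

Lemma src_uniq (s t : S) (xi : Filt S) : isgerm (s, xi) -> isgerm (t, xi) -> phi s = phi t ->
  germ_eq (s, xi) (t, xi).
Proof.
move=> [ht hs] [_ ht2] hst; rewrite /= in ht hs ht2.
have hF := tight_filter ht.
set e := s^* ** s ** (t^* ** t).
have he : xi e by apply: filt_meet.
have hei : idem e := filt_idem hF he.
have hne : e <> z := filt_ne0 hF he.
split => //=; exists e; split => //.
set u := s ** e; set v := t ** e.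
have hL1 : idem (s^* ** s) := idemL s. have hL2 : idem (t^* ** t) := idemL t.
have uu : u^* ** u = e.
  rewrite /u star_mul (idem_star hei).
  have -> : e ** s^* ** (s ** e) = e ** (s^* ** s) ** e by rewrite !mA.
  have -> : e ** (s^* ** s) = e by apply: leE_mulr.
  exact: hei.
have vv : v^* ** v = e.
  rewrite /v star_mul (idem_star hei).
  have -> : e ** t^* ** (t ** e) = e ** (t^* ** t) ** e by rewrite !mA.
  have -> : e ** (t^* ** t) = e by apply: leE_mull.
  exact: hei.
have ue : u ** e = u by rewrite /u -mA hei.
have ve : v ** e = v by rewrite /v -mA hei.
have hu : u <> z by move=> E; apply: hne; rewrite -uu E ms0.
have hv : v <> z by move=> E; apply: hne; rewrite -vv E ms0.
have phiu : phi u = phi s.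
  rewrite /u phi_mule //; by rewrite -/u.
have phiv : phi v = phi t.
  rewrite /v phi_mule //; by rewrite -/v.
have hvu : v ** u^* <> z.
  move=> E; apply: (ne0_R hv).
  have : v ** u^* ** (u ** v^*) = v ** v^*.
    have -> : v ** u^* ** (u ** v^*) = v ** (u^* ** u) ** v^* by rewrite !mA.
    by rewrite uu ve.
  by rewrite E m0s => <-.
have fid : idem (v ** u^*).
  apply: phi1 => //; rewrite phiM // phi_star // phiv -hst -phiu gVr //.
set f := v ** u^*.
have ff : u ** v^* = f.
  rewrite /f -(idem_star fid) star_mul starK //.
have fu : f ** u = v by rewrite /f -mA uu ve.
have fv : f ** v = u by rewrite -ff -mA vv ue.
have : u = v by rewrite -fv -fu mA fid.
by rewrite /u /v.
Qed.

Definition grade (g : germ S) : G := phi (rep g).1.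

Lemma grade_mem (g : germ S) p : sval g p -> grade g = phi p.1.
Proof.
move=> h; apply: germ_eq_phi; [exact: germ_mem_isgerm (rep_mem g) |].
exact: germ_mem_eq (rep_mem g) h.
Qed.

Lemma germ_inj_src (g g' : germ S) : grade g = grade g' -> src g = src g' -> g = g'.
Proof.
move=> e1 e2.
have h1 := rep_mem g; have h2 := rep_mem g'.
case E1: (rep g) h1 => [s xi] h1; case E2: (rep g') h2 => [t xi'] h2.
rewrite (grade_mem h1) (grade_mem h2) /= in e1.
rewrite (src_mem h1) (src_mem h2) /= in e2.
rewrite -e2 in h2.
apply: (germ_ext2 h1 h2); apply: src_uniq => //.
- exact: germ_mem_isgerm h1.
- exact: germ_mem_isgerm h2.
Qed.

Lemma isgerm_inv (s : S) (xi : Filt S) : isgerm (s, xi) -> isgerm (s^*, thetas s xi).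
Proof.
move=> [ht hs]; rewrite /= in ht hs; split => /=; first exact: thetas_tight.
rewrite starK; apply: thetas_src => //; exact: tight_filter.
Qed.

Lemma germ_inj_rng (g g' : germ S) : grade g = grade g' -> rng g = rng g' -> g = g'.
Proof.
move=> e1 e2.
have h1 := rep_mem g; have h2 := rep_mem g'.
case E1: (rep g) h1 => [s xi] h1; case E2: (rep g') h2 => [t xi'] h2.
rewrite (grade_mem h1) (grade_mem h2) /= in e1.
rewrite (rng_mem h1) (rng_mem h2) /= in e2.
have hg1 := germ_mem_isgerm h1; have hg2 := germ_mem_isgerm h2.
have hi1 := isgerm_inv hg1; have hi2 := isgerm_inv hg2.
rewrite e2 in hi1.
have hs0 := germ_ne0 hg1; have ht0 := germ_ne0 hg2.
have := src_uniq hi1 hi2.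
rewrite !phi_star // e1 => /(_ erefl) he.
have := germ_eq_thetas hi1 hi2 he; rewrite /= -e2.
have [ht1 hs1] := hg1; have [ht2 hs2] := hg2.
rewrite (thetas_inv (tight_filter ht1) hs1) e2 (thetas_inv (tight_filter ht2) hs2) => exi.
apply: germ_inj_src; first by rewrite (grade_mem h1) (grade_mem h2).
by rewrite (src_mem h1) (src_mem h2).
Qed.

Lemma grade_mkg (p : S * Filt S) (h : isgerm p) : grade (mkg h) = phi p.1.
Proof. exact: grade_mem (mkg_mem h). Qed.
Lemma rng_mkg (p : S * Filt S) (h : isgerm p) : rng (mkg h) = thetas p.1 p.2.
Proof. exact: rng_mem (mkg_mem h). Qed.
Lemma src_mkg (p : S * Filt S) (h : isgerm p) : src (mkg h) = p.2.
Proof. exact: src_mem (mkg_mem h). Qed.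

Lemma Dg_char (g : G) (eta : Filt S) :
  Dg phi g eta <-> is_tight eta /\ exists s, s <> z /\ phi s = g /\ eta (s ** s^*).
Proof.
split.
- move=> [ht [x [[hx [[s [hs [hsg hle]]]|[_ ->]]] hex]]].
  + split => //; exists s; split => //; split => //.
    by apply: (filt_up (tight_filter ht) hex); [exact: idemR|].
  + by case: (filt_no0 (tight_filter ht) hex).
- move=> [ht [s [hs [hsg he]]]]; split => //; exists (s ** s^*); split => //.
  split; first exact: idemR. left; exists s; split => //; split => //.
  exact: (idemR s).
Qed.

Lemma germ_exists (g : G) (eta : Filt S) : Dg phi g eta ->
  exists ga : germ S, grade ga = g /\ rng ga = eta.
Proof.
move=> /Dg_char [ht [s [hs [hsg he]]]].
have hF := tight_filter ht.
have hp : isgerm (s, thetas (s^*) eta).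
  split => /=; first by apply: thetas_tight => //; rewrite starK.
  apply/thetasP => //; first by rewrite starK.
  split; first exact: idemL.
  by rewrite /cj starK mA i1.
exists (mkg hp); split; first by rewrite grade_mkg.
rewrite rng_mkg /=.
have := thetas_inv (s := s^*) hF; rewrite starK => -> //.
Qed.

Lemma rng_Dg (ga : germ S) : Dg phi (grade ga) (rng ga).
Proof.
have h := rep_mem ga; case E: (rep ga) h => [s xi] h.
have hg := germ_mem_isgerm h.
apply/Dg_char; split; first exact: rng_tight.
exists s; split; first exact: (germ_ne0 hg).
split; first by rewrite (grade_mem h).
rewrite (rng_mem h) /=; have [ht hs] := hg.
apply: thetas_src => //; exact: tight_filter.
Qed.

Lemma theta_eq (s : S) (xi : Filt S) : isgerm (s, xi) -> theta phi (phi s) xi = thetas s xi.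
Proof.
move=> hg; have [ht hs] := hg; rewrite /= in ht hs.
have hF := tight_filter ht.
apply: predext => y; split.
- move=> [hy [t [x [ht0 [htg [hx [hxt hy2]]]]]]].
  have htt : xi (t^* ** t) by apply: (filt_up hF hx); [exact: idemL|].
  have hg' : isgerm (t, xi) by [].
  have E := germ_eq_thetas hg' hg (src_uniq hg' hg htg).
  rewrite /= in E; rewrite -E.
  split => //; exists x; split => //.
- move=> [hy [x [hx [hxs hy2]]]]; split => //.
  exists s, x; split; first exact: (germ_ne0 hg).
  by [].
Qed.
End Grading.


Lemma In_app_iff (T : Type) (x : T) (l1 l2 : seq T) : List.In x (l1 ++ l2) <-> List.In x l1 \/ List.In x l2.
Proof. exact: List.in_app_iff. Qed.

Definition pb {T : Type} (P : T -> Prop) (x : T) : bool :=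
  if excluded_middle_informative (P x) then true else false.
Lemma pbP {T : Type} (P : T -> Prop) x : pb P x <-> P x.
Proof. rewrite /pb; case: excluded_middle_informative => //. Qed.

Lemma In_filter (T : Type) (p : pred T) (x : T) (l : seq T) :
  List.In x (filter p l) <-> List.In x l /\ p x.
Proof.
elim: l => [|y l IH] /=; first by split => [|[]].
case hp: (p y) => /=.
- rewrite IH; split.
  + by case=> [<-|[h1 h2]]; [split; [left|] | split; [right|]].
  + by case=> [[<-|h] h2]; [left | right].
- rewrite IH; split.
  + by case=> h1 h2; split; [right|].
  + by case=> [[<-|h] h2]; [rewrite hp in h2 | ].
Qed.

Lemma lift_list (A B : Type) (P : A -> Prop) (f : A -> B) (l : seq B) :
  (forall b, List.In b l -> exists a, P a /\ b = f a) ->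
  exists l' : seq A, (forall a, List.In a l' -> P a) /\ l = map f l'.
Proof.
elim: l => [|b l IH] h; first by exists [::].
have [a [ha ->]] := h b (or_introl erefl).
have [l' [h1 h2]] := IH (fun b' hb' => h b' (or_intror hb')).
exists (a :: l'); split; last by rewrite h2.
by move=> a' [<-|]; [|apply: h1].
Qed.

Section Topo.
Variable S : invsemigroup.
Local Notation "a ** b" := (@smul S a b) (at level 40, left associativity).
Local Notation "s ^*" := (@sstar S s).
Local Notation z := (@szero S).

Definition basic (xs ys : seq S) : tset S := fun xi => is_tight xi /\ in_basic xs ys xi.

Lemma basic_open xs ys : idem_list xs -> idem_list ys -> topen (basic xs ys).
Proof.
move=> hx hy; split; first by move=> xi [].
move=> xi [ht hb]; exists xs, ys; split => //; split => //; split => //.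
Qed.

Lemma in_basic_cat (xs1 ys1 xs2 ys2 : seq S) (F : Filt S) :
  in_basic (xs1 ++ xs2) (ys1 ++ ys2) F <-> in_basic xs1 ys1 F /\ in_basic xs2 ys2 F.
Proof.
rewrite /in_basic; split.
- case=> h1 h2; split; split => x hx.
  + by apply: h1; apply/In_app_iff; left.
  + by apply: h2; apply/In_app_iff; left.
  + by apply: h1; apply/In_app_iff; right.
  + by apply: h2; apply/In_app_iff; right.
- case=> [[h1 h2] [h3 h4]]; split => x /In_app_iff [] hx.
  + exact: h1. + exact: h3. + exact: h2. + exact: h4.
Qed.

Lemma idem_list_cat (l1 l2 : seq S) : idem_list l1 -> idem_list l2 -> idem_list (l1 ++ l2).
Proof. move=> h1 h2 x /In_app_iff []; [apply: h1 | apply: h2]. Qed.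

Definition closedT (W : tset S) : Prop :=
  forall eta, is_tight eta -> ~ W eta -> exists xs ys, idem_list xs /\ idem_list ys /\
    in_basic xs ys eta /\ forall zeta, is_tight zeta -> in_basic xs ys zeta -> ~ W zeta.

Lemma filt_neq (xi eta : Filt S) : is_filter xi -> is_filter eta -> xi <> eta ->
  exists x, idem x /\ ((xi x /\ ~ eta x) \/ (~ xi x /\ eta x)).
Proof.
move=> h1 h2 hne; apply: NNPP => hn; apply: hne; apply: predext => x.
split => hx.
- apply: NNPP => hy; apply: hn; exists x; split; [exact: filt_idem h1 hx | by left].
- apply: NNPP => hy; apply: hn; exists x; split; [exact: filt_idem h2 hx | by right].
Qed.

Lemma compact_closed (K : tset S) : tcompact K -> (forall xi, K xi -> is_tight xi) -> closedT K.
Proof.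
move=> hK hKt eta het hne.
pose C := fun O : tset S => exists x, idem x /\
  ((~ eta x /\ O = basic [:: x] [::]) \/ (eta x /\ O = basic [::] [:: x])).
have hC : forall O, C O -> topen O.
  move=> O [x [hx [[_ ->]|[_ ->]]]]; apply: basic_open => // y [<-|[]] //.
have hcov : forall xi, K xi -> exists O, C O /\ O xi.
  move=> xi hxi.
  have hneq : xi <> eta by move=> e; apply: hne; rewrite -e.
  have [x [hx [[h1 h2]|[h1 h2]]]] := filt_neq (tight_filter (hKt _ hxi)) (tight_filter het) hneq.
  - exists (basic [:: x] [::]); split; first by exists x; split => //; left.
    split; first exact: hKt. by split => // y [<-|[]].
  - exists (basic [::] [:: x]); split; first by exists x; split => //; right.
    split; first exact: hKt. by split => // y [<-|[]].
have [l [hl hlc]] := hK C hC hcov.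
have key : forall l : seq (tset S), (forall O, List.In O l -> C O) ->
  exists xs ys, idem_list xs /\ idem_list ys /\ in_basic xs ys eta /\
    forall zeta, in_basic xs ys zeta -> forall O, List.In O l -> ~ O zeta.
  elim=> [|O l' IH] hl'.
  - exists [::], [::]; do 3! split => //.
  - have [xs [ys [hxs [hys [hb hd]]]]] := IH (fun O h => hl' O (or_intror h)).
    have [x [hx [[h1 ->]|[h1 ->]]]] := hl' O (or_introl erefl).
    + exists xs, (x :: ys); split => //; split; first by move=> y [<-|]; [|apply: hys].
      split; first by case: hb => hb1 hb2; split => // y [<-|]; [|apply: hb2].
      move=> zeta [hz1 hz2] O' [<-|hO'].
      * by move=> [_ [hzx _]]; apply: (hz2 x); [left | apply: hzx; left].
      * apply: (hd zeta _ O' hO'); split; [exact: hz1 | move=> y hy; apply: hz2; by right].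
    + exists (x :: xs), ys; split; first by move=> y [<-|]; [|apply: hxs].
      split => //; split; first by case: hb => hb1 hb2; split => // y [<-|]; [|apply: hb1].
      move=> zeta [hz1 hz2] O' [<-|hO'].
      * by move=> [_ [_ hzx]]; apply: (hzx x); [left | apply: hz1; left].
      * apply: (hd zeta _ O' hO'); split; [move=> y hy; apply: hz1; by right | exact: hz2].
have [xs [ys [hxs [hys [hb hd]]]]] := key l hl.
exists xs, ys; do 3! split => //.
move=> zeta hz hzb hKz; have [O [hO hOz]] := hlc _ hKz.
exact: (hd zeta hzb O hO hOz).
Qed.

Lemma closed_sub_compact (K W : tset S) : tcompact K -> (forall xi, K xi -> is_tight xi) ->
  (forall xi, W xi -> K xi) -> closedT W -> tcompact W.
Proof.
move=> hK hKt hWK hW C hC hcov.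
pose Wc : tset S := fun zeta => is_tight zeta /\ ~ W zeta.
have hWc : topen Wc.
  split; first by move=> ? [].
  move=> eta [het hne]; have [xs [ys [hxs [hys [hb hd]]]]] := hW eta het hne.
  exists xs, ys; do 3! split => //.
  move=> zeta hz hzb; split => //; exact: hd.
pose C' := fun O => C O \/ O = Wc.
have [l [hl hlc]] : exists l : seq (tset S), (forall O, List.In O l -> C' O) /\
      forall xi, K xi -> exists O, List.In O l /\ O xi.
  apply: hK.
  - by move=> O [hO|->]; [apply: hC|].
  - move=> xi hxi; case: (classic (W xi)) => hw.
    + by have [O [hO hOx]] := hcov xi hw; exists O; split => //; left.
    + by exists Wc; split; [right | split => //; apply: hKt].
exists (filter (pb C) l); split.
- by move=> O /In_filter [_ /pbP].
- move=> xi hxi; have [O [hO hOx]] := hlc xi (hWK xi hxi).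
  exists O; split => //; apply/In_filter; split => //; apply/pbP.
  case: (hl O hO) => // e; rewrite e in hOx; by case: hOx.
Qed.

Lemma compact_union (K1 K2 : tset S) : tcompact K1 -> tcompact K2 ->
  tcompact (fun xi => K1 xi \/ K2 xi).
Proof.
move=> h1 h2 C hC hcov.
have [l1 [hl1 hc1]] := h1 C hC (fun xi hx => hcov xi (or_introl hx)).
have [l2 [hl2 hc2]] := h2 C hC (fun xi hx => hcov xi (or_intror hx)).
exists (l1 ++ l2); split.
- by move=> O /In_app_iff [] ?; [apply: hl1 | apply: hl2].
- move=> xi [hx|hx].
  + by have [O [hO hOx]] := hc1 xi hx; exists O; split => //; apply/In_app_iff; left.
  + by have [O [hO hOx]] := hc2 xi hx; exists O; split => //; apply/In_app_iff; right.
Qed.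

Lemma compact_empty : tcompact (fun _ : Filt S => False).
Proof. by move=> C _ _; exists [::]; split. Qed.

Lemma compact_ext (K K' : tset S) : (forall xi, K xi <-> K' xi) -> tcompact K -> tcompact K'.
Proof. by move=> h; rewrite (predext h). Qed.

Lemma compact_bigunion (A : Type) (l : seq A) (F : A -> tset S) :
  (forall a, List.In a l -> tcompact (F a)) ->
  tcompact (fun xi => exists a, List.In a l /\ F a xi).
Proof.
elim: l => [|a l IH] h.
- apply: compact_ext compact_empty => xi; split => // [[a [[] _]]].
- have := compact_union (h a (or_introl erefl)) (IH (fun b hb => h b (or_intror hb))).
  apply: compact_ext => xi; split.
  + by case=> [hx|[b [hb hx]]]; [exists a; split => //; left | exists b; split => //; right].
  + by case=> b [[<-|hb] hx]; [left | right; exists b].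
Qed.
End Topo.


Import GRing.Theory.
Local Open Scope ring_scope.

Lemma In_mem (T : eqType) (x : T) (s : seq T) : List.In x s <-> x \in s.
Proof.
elim: s => [|y s IH] //=; rewrite inE; split.
- by case=> [->|/IH ->]; rewrite ?eqxx ?orbT.
- by case/orP => [/eqP ->|/IH]; [left|right].
Qed.

Lemma indic_T (T : Type) (R : pzRingType) (U : T -> Prop) x : U x -> indic U x = 1 :> R.
Proof. by rewrite /indic; case: excluded_middle_informative. Qed.
Lemma indic_F (T : Type) (R : pzRingType) (U : T -> Prop) x : ~ U x -> indic U x = 0 :> R.
Proof. by rewrite /indic; case: excluded_middle_informative. Qed.

Section Norm.
Variable S : invsemigroup.
Variable G : group.
Variable phi : S -> G.
Variable R : comPzRingType.

Definition LC (f : Filt S -> R) (xi : Filt S) : Prop :=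
  exists xs ys, idem_list xs /\ idem_list ys /\ in_basic xs ys xi /\
    forall zeta, is_tight zeta -> in_basic xs ys zeta -> f zeta = f xi.

Lemma LC_const c xi : LC (fun _ => c) xi.
Proof.
exists [::], [::]; split; first by move=> ? []. split; first by move=> ? [].
split; [by split => ? [] | by []].
Qed.

Lemma LC_add f h xi : LC f xi -> LC h xi -> LC (fun x => f x + h x) xi.
Proof.
move=> [xs1 [ys1 [h1 [h2 [h3 h4]]]]] [xs2 [ys2 [h5 [h6 [h7 h8]]]]].
exists (xs1 ++ xs2), (ys1 ++ ys2); split; first exact: idem_list_cat.
split; first exact: idem_list_cat.
split; first by apply/in_basic_cat.
move=> zeta hz /in_basic_cat [b1 b2]; by rewrite h4 // h8.
Qed.

Lemma LC_scale c f xi : LC f xi -> LC (fun x => c * f x) xi.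
Proof. move=> [xs [ys [h1 [h2 [h3 h4]]]]]; exists xs, ys; do 3! split => //.
move=> zeta hz hb; by rewrite h4.
Qed.

Lemma LC_indic (U : tset S) xi : topen U -> closedT U -> is_tight xi -> LC (indic U) xi.
Proof.
move=> hU hc hxi; case: (classic (U xi)) => hx.
- have [xs [ys [h1 [h2 [h3 h4]]]]] := hU.2 xi hx.
  exists xs, ys; do 3! split => //.
  move=> zeta hz hb; rewrite !indic_T //; exact: h4.
- have [xs [ys [h1 [h2 [h3 h4]]]]] := hc xi hxi hx.
  exists xs, ys; do 3! split => //.
  move=> zeta hz hb; rewrite !indic_F //; exact: h4.
Qed.

Lemma Tc_closed (U : tset S) : Tc U -> closedT U.
Proof. move=> [ho hc]; apply: compact_closed => //; exact: ho.1. Qed.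

Definition lsum (l : seq (R * tset S)) : Filt S -> R :=
  fun xi => \sum_(p <- l) p.1 * indic p.2 xi.

Lemma LC_lsum l xi : (forall p, List.In p l -> Tc p.2) -> is_tight xi -> LC (lsum l) xi.
Proof.
elim: l => [|p l IH] hl hxi.
- have -> : lsum [::] = (fun _ => 0) by apply functional_extensionality => x; rewrite /lsum big_nil.
  exact: LC_const.
- have -> : lsum (p :: l) = (fun x => p.1 * indic p.2 x + lsum l x).
    by apply functional_extensionality => x; rewrite /lsum big_cons.
  apply: LC_add; last by apply: IH => // q hq; apply: hl; right.
  apply: LC_scale; apply: LC_indic => //; have h := hl p (or_introl erefl).
  + exact: h.1.
  + exact: Tc_closed.
Qed.

Fixpoint subsums (l : seq R) : seq R :=
  match l with [::] => [:: 0] | r :: l => subsums l ++ map (fun v => r + v) (subsums l) end.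

Lemma lsum_subsums l xi : lsum l xi \in subsums (map fst l).
Proof.
elim: l => [|p l IH]; first by rewrite /lsum big_nil inE.
rewrite /lsum big_cons /= mem_cat -/(lsum l xi).
case: (classic (p.2 xi)) => h.
- rewrite indic_T // mulr1; apply/orP; right; exact: map_f.
- by rewrite indic_F // mulr0 add0r IH.
Qed.

Lemma lsum_out l xi : (forall p, List.In p l -> ~ p.2 xi) -> lsum l xi = 0.
Proof.
rewrite /lsum; elim: l => [|p l IH] h; first by rewrite big_nil.
rewrite big_cons indic_F ?mulr0 ?add0r; last by apply: h; left.
by apply: IH => q hq; apply: h; right.
Qed.

Lemma sum_pick (V : seq R) v0 (c : R) : uniq V ->
  \sum_(v <- V) (if v == v0 then c else 0) = if v0 \in V then c else 0.
Proof.
elim: V => [|x V IH] /=; first by rewrite big_nil.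
move=> /andP [hx hu]; rewrite big_cons IH // inE.
case: (eqVneq x v0) => [<-|ne]; first by rewrite (negPf hx) addr0.
by rewrite add0r.
Qed.

Lemma norm_Lc (g : G) (l : seq (R * tset S)) :
  (forall p, List.In p l -> TcI phi g p.2) -> inLc phi g (lsum l).
Proof.
move=> hl.
have hlT : forall p, List.In p l -> Tc p.2 by move=> p hp; exact: (hl p hp).1.
have hlt : forall p xi, List.In p l -> p.2 xi -> is_tight xi.
  by move=> p xi hp hx; apply: (hlT p hp).1.1.
set f := lsum l.
set V := undup [seq v <- subsums (map fst l) | v != 0].
pose W := fun v : R => (fun xi : Filt S => is_tight xi /\ f xi = v) : tset S.
have hV : uniq V by apply: undup_uniq.
have hVnz : forall v, v \in V -> v != 0.
  by move=> v; rewrite mem_undup mem_filter => /andP [].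
pose K : tset S := fun xi => exists p, List.In p l /\ p.2 xi.
have hK : tcompact K by apply: compact_bigunion => p hp; exact: (hlT p hp).2.
have hKt : forall xi, K xi -> is_tight xi by move=> xi [p [hp hx]]; exact: hlt p xi hp hx.
have hWK : forall v xi, v != 0 -> W v xi -> K xi.
  move=> v xi hv [ht hf]; apply: NNPP => hn.
  have : f xi = 0 by apply: lsum_out => p hp hpx; apply: hn; exists p.
  by rewrite hf => e; rewrite e eqxx in hv.
have hWc : forall v, closedT (W v).
  move=> v eta het hne.
  have [xs [ys [h1 [h2 [h3 h4]]]]] := LC_lsum hlT het.
  exists xs, ys; do 3! split => //.
  move=> zeta hz hb [_ hzv]; apply: hne; split => //.
  by rewrite /f -(h4 zeta hz hb).
have hWo : forall v, topen (W v).
  move=> v; split; first by move=> xi [].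
  move=> xi [ht hfx].
  have [xs [ys [h1 [h2 [h3 h4]]]]] := LC_lsum hlT ht.
  exists xs, ys; do 3! split => //.
  move=> zeta hz hb; split => //; by rewrite /f (h4 zeta hz hb).
exists [seq (v, W v) | v <- V]; split.
  by rewrite -map_comp map_id_in.
split.
  move=> p /List.in_map_iff [v [<- hv]]; rewrite /=.
  have hv' : v \in V by apply/In_mem.
  have hv0 := hVnz v hv'.
  split => //; split; first split.
  - exact: hWo.
  - apply: (closed_sub_compact hK hKt); last exact: (hWc v).
    by move=> xi; apply: hWK.
  - move=> xi hx; have [q [hq hqx]] := hWK v xi hv0 hx.
    exact: ((hl q hq).2 xi hqx).
split.
  move=> i j /andP [hij hj] xi; rewrite size_map in hj.
  have hi : (i < size V)%N by apply: ltn_trans hj.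
  rewrite (nth_map 0) // (nth_map 0) //= => [[_ e1]] [_ e2].
  have : nth 0 V i = nth 0 V j by rewrite -e1 -e2.
  move/eqP; rewrite nth_uniq //; move/eqP => e; rewrite e in hij.
  by rewrite ltnn in hij.
apply functional_extensionality => xi.
rewrite big_map /=.
case: (classic (is_tight xi)) => ht.
- transitivity (\sum_(v <- V) (if v == f xi then f xi else 0)); last first.
    apply: eq_bigr => v _; case: eqP => [->|ne].
    + by rewrite indic_T ?mulr1.
    + by rewrite indic_F ?mulr0 // => [[_ e]]; apply: ne.
  rewrite sum_pick //.
  case: ifP => // hn; apply/eqP; apply: contraFT hn => hnz.
  rewrite mem_undup mem_filter hnz /=; exact: lsum_subsums.
- rewrite big1; first by apply: lsum_out => p hp hx; apply: ht; exact: hlt p xi hp hx.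
  by move=> v _; rewrite indic_F ?mulr0 // => [[]].
Qed.
End Norm.


Section GTopo.
Variable S : invsemigroup.
Variable G : group.
Variable phi : S -> G.
Hypothesis hphi : pure_grading phi.
Local Notation "a ** b" := (@smul S a b) (at level 40, left associativity).
Local Notation "s ^*" := (@sstar S s).
Local Notation z := (@szero S).
Local Notation grade := (grade phi).
Local Notation grade_mem := (grade_mem hphi).
Local Notation grade_mkg := (grade_mkg hphi).
Local Notation germ_inj_rng := (germ_inj_rng hphi).
Local Notation germ_inj_src := (germ_inj_src hphi).
Local Notation germ_exists := (germ_exists hphi).
Local Notation rng_Dg := (rng_Dg hphi).

Definition Bg (g : G) (U : tset S) : germ S -> Prop := fun ga => grade ga = g /\ U (rng ga).
Definition Rg (g : G) (O : germ S -> Prop) : tset S :=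
  fun eta => exists ga, O ga /\ grade ga = g /\ rng ga = eta.

Lemma in_basic_cons x xs ys (F : Filt S) : in_basic (x :: xs) ys F <-> F x /\ in_basic xs ys F.
Proof.
split.
- by case=> h1 h2; split; [apply: h1; left | split => // y hy; apply: h1; right].
- by case=> hx [h1 h2]; split => // y [<-|hy]; [|apply: h1].
Qed.

Lemma Theta_mem s U (h : germ S) : Theta s U h -> exists xi, U xi /\ sval h (s, xi) /\
  grade h = phi s /\ rng h = thetas s xi /\ src h = xi.
Proof.
move=> [xi [hU hs]]; exists xi; split => //; split => //.
by rewrite (grade_mem hs) (rng_mem hs) (src_mem hs).
Qed.

Lemma Bg_open g U : topen U -> gopen (Bg g U).
Proof.
move=> hU ga [hg hr].
have h := rep_mem ga; case E: (rep ga) h => [s xi] h.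
have [ht hs] := germ_mem_isgerm h; rewrite /= in ht hs.
have hF := tight_filter ht.
rewrite (grade_mem h) /= in hg; rewrite (rng_mem h) /= in hr.
have [xs [ys [hxs [hys [hb hn]]]]] := hU.2 _ hr.
pose U' : tset S := fun zeta => is_tight zeta /\ zeta (s^* ** s) /\
   in_basic (map (cj s) xs) (map (cj s) ys) zeta.
exists s, U'; split.
  split; first by move=> ? [].
  move=> zeta [hz [hzs hzb]]; exists (s^* ** s :: map (cj s) xs), (map (cj s) ys).
  split; first by move=> x [<-|hx]; [exact: idemL | apply: (idem_list_map (s:=s) hxs); exact hx].
  split; first exact: idem_list_map.
  split; first by apply/in_basic_cons.
  by move=> eta het /in_basic_cons [h1 h2]; split.
split; first by move=> ? [_ []].
split.
  exists xi; split => //; split => //; split => //.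
  by apply/(in_basic_thetas hF hs hxs hys).
move=> h' /Theta_mem [zeta [[hz [hzs hzb]] [hm [hg' [hr' _]]]]].
split; first by rewrite hg' hg.
rewrite hr'; apply: hn; first exact: thetas_tight.
by apply/(in_basic_thetas (tight_filter hz) hzs hxs hys).
Qed.

Lemma Rg_open g O : gopen O -> topen (Rg g O).
Proof.
move=> hO; split; first by move=> eta [ga [_ [_ <-]]]; apply: rng_tight.
move=> eta [ga [hga [hg hr]]].
have [s [U [hU [hUs [hT hTO]]]]] := hO ga hga.
have [xi [hxi [hm [hg' [hr' _]]]]] := Theta_mem hT.
have ht : is_tight xi := hU.1 _ hxi.
have hF := tight_filter ht.
have hs : xi (s^* ** s) := hUs _ hxi.
have [xs [ys [hxs [hys [hb hn]]]]] := hU.2 _ hxi.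
have heta : is_tight eta by rewrite -hr; apply: rng_tight.
have hes : eta (s^*^* ** s^*) by rewrite starK -hr hr'; apply: thetas_src.
have hinv : thetas (s^*) eta = xi by rewrite -hr hr' thetas_inv.
exists (s ** s^* :: map (cj (s^*)) xs), (map (cj (s^*)) ys).
split; first by move=> x [<-|hx]; [exact: idemR | apply: (idem_list_map (s:=s^*) hxs); exact hx].
split; first exact: idem_list_map.
split.
  apply/in_basic_cons; split; first by rewrite starK in hes.
  apply/(in_basic_thetas (tight_filter heta) hes hxs hys); by rewrite hinv.
move=> zeta hz /in_basic_cons [hzs hzb].
have hzs' : zeta (s^*^* ** s^*) by rewrite starK.
have hzF := tight_filter hz.
have ht' := thetas_tight hz hzs'.
have hb' := (in_basic_thetas hzF hzs' hxs hys).2 hzb.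
have hU' : U (thetas (s^*) zeta) by apply: hn.
have hg0 : isgerm (s, thetas (s^*) zeta) by split => //; apply: hUs.
exists (mkg hg0); split.
  apply: hTO; exists (thetas (s^*) zeta); split => //; exact: mkg_mem.
split; first by rewrite grade_mkg /= -hg' hg.
rewrite rng_mkg /=.
have := thetas_inv hzF hzs'; by rewrite starK.
Qed.

Lemma Bg_compact g U : TcI phi g U -> gcompact (Bg g U).
Proof.
move=> [[hUo hUc] hUD] C hC hcov.
pose C' := fun V : tset S => exists O, C O /\ V = Rg g O.
have [l' [hl' hc']] : exists l' : seq (tset S), (forall V, List.In V l' -> C' V) /\
    forall xi, U xi -> exists V, List.In V l' /\ V xi.
  apply: hUc.
  - by move=> V [O [hO ->]]; apply: Rg_open; apply: hC.
  - move=> eta heta.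
    have [ga [hg hr]] := germ_exists (hUD _ heta).
    have [O [hO hOg]] := hcov ga (conj hg (eq_ind_r U heta hr)).
    by exists (Rg g O); split; [exists O | exists ga].
have [l [hl el]] := lift_list hl'.
exists l; split => //.
move=> ga [hg hr]; have [V [hV hVx]] := hc' _ hr.
rewrite el in hV; have [O [eO hO]] := (List.in_map_iff _ _ _).1 hV.
exists O; split => //.
rewrite -eO in hVx; have [ga' [hO' [hg' hr']]] := hVx.
have -> : ga = ga' by apply: germ_inj_rng; [rewrite hg hg' | by rewrite hr'].
exact: hO'.
Qed.

Lemma Rg_compact g (K : germ S -> Prop) : gcompact K -> (forall ga, K ga -> grade ga = g) ->
  tcompact (Rg g K).
Proof.
move=> hK hKg C hC hcov.
pose C' := fun O : germ S -> Prop => exists V, C V /\ O = Bg g V.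
have [l' [hl' hc']] : exists l' : seq (germ S -> Prop), (forall O, List.In O l' -> C' O) /\
    forall ga, K ga -> exists O, List.In O l' /\ O ga.
  apply: hK.
  - by move=> O [V [hV ->]]; apply: Bg_open; apply: hC.
  - move=> ga hga.
    have [V [hV hVx]] := hcov (rng ga) (ex_intro _ ga (conj hga (conj (hKg _ hga) erefl))).
    by exists (Bg g V); split; [exists V | split => //; apply: hKg].
have [l [hl el]] := lift_list hl'.
exists l; split => //.
move=> eta [ga [hga [hg <-]]]; have [O [hO hOx]] := hc' _ hga.
rewrite el in hO; have [V [eV hV]] := (List.in_map_iff _ _ _).1 hO.
exists V; split => //; rewrite -eV in hOx; exact: hOx.2.
Qed.

Lemma bisect_Bg g U : bisection (Bg g U).
Proof.
move=> a b [ga hra] [gb hrb] [[xi [[s ha] [t hb]]]|[eta [[s [xi [ha ->]]] [t [xi' [hb e]]]]]].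
- apply: germ_inj_src; first by rewrite ga gb.
  by rewrite (src_mem ha) (src_mem hb).
- apply: germ_inj_rng; first by rewrite ga gb.
  by rewrite (rng_mem ha) (rng_mem hb) /= e.
Qed.

Lemma gopen_gradeP (O : germ S -> Prop) (P : G -> Prop) :
  gopen O -> gopen (fun ga => O ga /\ P (grade ga)).
Proof.
move=> hO ga [hga hP].
have [s [U [hU [hUs [hT hTO]]]]] := hO ga hga.
exists s, U; split => //; split => //; split => //.
move=> h hh; split; first exact: hTO.
have [_ [_ [_ [e1 _]]]] := Theta_mem hh; have [_ [_ [_ [e2 _]]]] := Theta_mem hT.
by rewrite e1 -e2.
Qed.

Lemma gcompact_grade (B : germ S -> Prop) g : gcompact B -> gopen B ->
  gcompact (fun ga => B ga /\ grade ga = g).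
Proof.
move=> hB hBo C hC hcov.
pose Bc := fun ga => B ga /\ (fun h => h <> g) (grade ga).
have hBc : gopen Bc by apply: gopen_gradeP.
pose C' := fun O => C O \/ O = Bc.
have [l [hl hlc]] : exists l : seq (germ S -> Prop), (forall O, List.In O l -> C' O) /\
    forall ga, B ga -> exists O, List.In O l /\ O ga.
  apply: hB.
  - by move=> O [hO|->]; [apply: hC|].
  - move=> ga hga; case: (classic (grade ga = g)) => e.
    + by have [O [hO hOx]] := hcov ga (conj hga e); exists O; split => //; left.
    + by exists Bc; split; [right | split].
exists (filter (pb C) l); split.
- by move=> O /In_filter [_ /pbP].
- move=> ga [hga e]; have [O [hO hOx]] := hlc ga hga.
  exists O; split => //; apply/In_filter; split => //; apply/pbP.
  case: (hl O hO) => // eO; rewrite eO in hOx; by case: hOx.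
Qed.

Lemma finite_grades (B : germ S -> Prop) : gcompact B -> gopen B ->
  exists gs : seq G, forall ga, B ga -> List.In (grade ga) gs.
Proof.
move=> hB hBo.
pose C := fun O : germ S -> Prop => gopen O /\ exists g, forall ga, O ga -> grade ga = g.
have [l [hl hlc]] : exists l : seq (germ S -> Prop), (forall O, List.In O l -> C O) /\
    forall ga, B ga -> exists O, List.In O l /\ O ga.
  apply: hB; first by move=> O [].
  move=> ga hga; have [s [U [hU [hUs [hT hTO]]]]] := hBo ga hga.
  exists (Theta s U); split => //; split.
  + move=> h hh; exists s, U; split => //.
  + exists (phi s) => h hh; by have [_ [_ [_ [e _]]]] := Theta_mem hh.
have key : forall l : seq (germ S -> Prop), (forall O, List.In O l -> C O) ->
    exists gs : seq G, forall O ga, List.In O l -> O ga -> List.In (grade ga) gs.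
  elim=> [|O l' IH] hl'; first by exists [::].
  have [gs hgs] := IH (fun O' h => hl' O' (or_intror h)).
  have [_ [g hg]] := hl' O (or_introl erefl).
  exists (g :: gs) => O' ga [<-|hO'] hx; first by left; symmetry; apply: hg.
  right; exact: hgs O' ga hO' hx.
have [gs hgs] := key l hl.
exists gs => ga hga; have [O [hO hOx]] := hlc ga hga; exact: hgs O ga hO hOx.
Qed.

Lemma Rg_Dg g (O : germ S -> Prop) eta : Rg g O eta -> Dg phi g eta.
Proof. move=> [ga [_ [<- <-]]]; exact: rng_Dg. Qed.

Lemma Bg_Rg g (O : germ S -> Prop) ga : Bg g (Rg g O) ga <-> O ga /\ grade ga = g.
Proof.
split.
- move=> [hg [ga' [hO [hg' hr]]]].
  have -> : ga = ga' by apply: germ_inj_rng; [rewrite hg hg' | by rewrite hr].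
  by split.
- move=> [hO hg]; split => //; by exists ga.
Qed.

Lemma TcI_Rg g (B : germ S -> Prop) : gcompact B -> gopen B ->
  TcI phi g (Rg g (fun ga => B ga /\ grade ga = g)).
Proof.
move=> hB hBo; split; last by move=> eta; apply: Rg_Dg.
split.
- apply: Rg_open; apply: (gopen_gradeP (P := fun h => h = g)) => //.
- apply: Rg_compact; first exact: gcompact_grade.
  by move=> ga [].
Qed.

Lemma cob_Bg g U : TcI phi g U -> compact_open_bisection (Bg g U).
Proof.
move=> hU; split; first by apply: Bg_open; exact: hU.1.1.
split; [exact: Bg_compact | exact: bisect_Bg].
Qed.
End GTopo.


Section Sums.
Variable V : zmodType.

Lemma NoDup_filter (T : Type) (p : pred T) (l : seq T) : List.NoDup l -> List.NoDup (filter p l).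
Proof.
elim: l => [|x l IH] /=; first by constructor.
move=> /List.NoDup_cons_iff [hx hl]; case: (p x); last exact: IH.
constructor; last exact: IH.
by move/In_filter => [].
Qed.

Lemma sum_perm (T : Type) (F : T -> V) (l1 l2 : seq T) : Permutation.Permutation l1 l2 ->
  \sum_(x <- l1) F x = \sum_(x <- l2) F x.
Proof.
elim=> [|x l l' _ IH|x y l|l l' l'' _ IH1 _ IH2].
- by [].
- by rewrite !big_cons IH.
- by rewrite !big_cons addrCA.
- by rewrite IH1 IH2.
Qed.

Lemma sum_support (T : Type) (F : T -> V) (l : seq T) :
  \sum_(x <- l) F x = \sum_(x <- filter (fun x => F x != 0) l) F x.
Proof.
rewrite big_filter [RHS]big_mkcond /=; apply: eq_bigr => x _.
by case: (eqVneq (F x) 0) => [->|].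
Qed.

Lemma sum_lists_eq (T : Type) (F : T -> V) (l1 l2 : seq T) :
  List.NoDup l1 -> List.NoDup l2 ->
  (forall x, F x <> 0 -> List.In x l1) -> (forall x, F x <> 0 -> List.In x l2) ->
  \sum_(x <- l1) F x = \sum_(x <- l2) F x.
Proof.
move=> n1 n2 c1 c2; rewrite (sum_support _ l1) (sum_support _ l2).
apply: sum_perm; apply: Permutation.NoDup_Permutation; try exact: NoDup_filter.
move=> x; rewrite !In_filter; split; case=> _ /eqP h; (split; [first [exact: c2 | exact: c1] | by apply/eqP]).
Qed.

Lemma fsumE (T : Type) (F : T -> V) (l : seq T) :
  List.NoDup l -> (forall x, F x <> 0 -> List.In x l) -> fsum F = \sum_(x <- l) F x.
Proof.
move=> n c; rewrite /fsum; case: excluded_middle_informative => [H|H].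
- case: constructive_indefinite_description => l0 [n0 c0] /=.
  exact: sum_lists_eq.
- by case: H; exists l.
Qed.
End Sums.

Lemma NoDup_exists (T : Type) (l : seq T) : exists l', List.NoDup l' /\ forall x, List.In x l <-> List.In x l'.
Proof.
elim: l => [|x l [l' [n h]]]; first by exists [::]; split => //; constructor.
case: (classic (List.In x l')) => hx.
- exists l'; split => // y; split; first by case=> [<-|/h]. by move/h => ?; right.
- exists (x :: l'); split; first by constructor.
  move=> y; split; by case=> [<-|/h ?]; [left|right].
Qed.

Lemma sum_pick_em (T : Type) (V : zmodType) (X : T -> V) (c : T) (l : seq T) : List.NoDup l ->
  \sum_(t <- l) (if excluded_middle_informative (c = t) then X t else 0) =
  if excluded_middle_informative (List.In c l) then X c else 0.
Proof.
elim: l => [|x l IH] /=; first by rewrite big_nil; case: excluded_middle_informative => // [[]].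
move=> /List.NoDup_cons_iff [hx hl]; rewrite big_cons IH //.
destruct (excluded_middle_informative (c = x)) as [e|ne].
- subst x.
  destruct (excluded_middle_informative (List.In c l)) as [hc|hc]; first by case: hx.
  destruct (excluded_middle_informative (c = c \/ List.In c l)) as [hh|hc']; last by case: hc'; left.
  by rewrite addr0.
- rewrite add0r.
  destruct (excluded_middle_informative (List.In c l)) as [hc|hc];
  destruct (excluded_middle_informative (x = c \/ List.In c l)) as [hc'|hc'] => //.
  + by case: hc'; right.
  + by case: hc' => // e; case: ne.
Qed.


Lemma indic_ext (T1 T2 : Type) (R : pzRingType) (P : T1 -> Prop) (Q : T2 -> Prop) x y :
  (P x <-> Q y) -> indic P x = indic Q y :> R.
Proof.
move=> h; case: (classic (P x)) => hx.
- by rewrite !indic_T //; apply/h.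
- by rewrite !indic_F // => /h.
Qed.

Section Main.
Variable S : invsemigroup.
Variable G : group.
Variable phi : S -> G.
Hypothesis hphi : pure_grading phi.
Variable R : comPzRingType.
Local Notation grade := (grade phi).
Local Notation germ_exists := (germ_exists hphi).

Definition Psi (a : G -> Filt S -> R) : germ S -> R := fun ga => a (grade ga) (rng ga).

Lemma inLc_unpack t (f : Filt S -> R) : inLc phi t f ->
  exists l, (forall p, List.In p l -> TcI phi t p.2) /\ f = lsum l.
Proof.
move=> [l [_ [hl [_ ->]]]]; exists l; split => //.
by move=> p hp; case: (hl p hp).
Qed.

Lemma inLc_zero t (f : Filt S -> R) xi : inLc phi t f -> ~ Dg phi t xi -> f xi = 0.
Proof.
move=> /inLc_unpack [l [hl ->]] hn; apply: lsum_out => p hp hx.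
by apply: hn; apply: (hl p hp).2.
Qed.

Lemma psi_stein a : inL phi a -> inSteinberg (Psi a).
Proof.
move=> [[ts0 hts0] hLc].
have [ts [hnd hts]] := NoDup_exists ts0.
have key : forall ts : seq G, exists L : seq (R * (germ S -> Prop)),
    (forall p, List.In p L -> compact_open_bisection p.2) /\
    forall ga, \sum_(p <- L) p.1 * indic p.2 ga =
      \sum_(t <- ts) (if excluded_middle_informative (grade ga = t) then a t (rng ga) else 0).
  elim=> [|t ts' [L [hL hLs]]].
    by exists [::]; split => // ga; rewrite !big_nil.
  have [l [hl el]] := inLc_unpack (hLc t).
  exists ([seq (p.1, Bg phi t p.2) | p <- l] ++ L); split.
    move=> p /In_app_iff [/List.in_map_iff [q [<- hq]]|hp]; last exact: hL.
    rewrite /=; apply: (cob_Bg hphi); exact: hl q hq.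
  move=> ga; rewrite big_cat big_cons hLs big_map /=; congr (_ + _).
  case: excluded_middle_informative => [e|ne].
  - rewrite el /lsum; apply: eq_bigr => p _; congr (_ * _).
    by apply: indic_ext; split; [case | split].
  - by rewrite big1 // => p _; rewrite indic_F ?mulr0 // => [[]].
have [L [hL hLs]] := key ts.
exists L; split => //.
apply functional_extensionality => ga; rewrite hLs sum_pick_em //.
case: excluded_middle_informative => // hn.
rewrite /Psi hts0 //; by move=> /hts.
Qed.

Lemma psi_inj a b : inL phi a -> inL phi b -> Psi a = Psi b -> a = b.
Proof.
move=> [_ ha] [_ hb] e.
apply functional_extensionality => t; apply functional_extensionality => xi.
case: (classic (Dg phi t xi)) => hD.
- have [ga [hg hr]] := germ_exists hD.
  have := congr1 (fun F => F ga) e; by rewrite /Psi hg hr.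
- by rewrite (inLc_zero (ha t) hD) (inLc_zero (hb t) hD).
Qed.

Lemma psi_surj f : inSteinberg f -> exists a, inL phi a /\ Psi a = f.
Proof.
move=> [l [hl ->]].
have [gs hgs] : exists gs : seq G, forall p ga, List.In p l -> p.2 ga -> List.In (grade ga) gs.
  elim: l hl => [|p l IH] hl; first by exists [::].
  have [gs1 h1] := IH (fun q hq => hl q (or_intror hq)).
  have [hpo [hpc _]] := hl p (or_introl erefl).
  have [gs2 h2] := finite_grades hphi hpc hpo.
  exists (gs2 ++ gs1) => q ga [<-|hq] hx; apply/In_app_iff; [left; exact: h2 | right; exact: h1 q ga hq hx].
pose a := fun t => lsum [seq (p.1, Rg phi t (fun ga => p.2 ga /\ grade ga = t)) | p <- l].
exists a; split; first split.
- exists gs => t ht; apply functional_extensionality => xi.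
  apply: lsum_out => p' /List.in_map_iff [p [<- hp]] /= [ga [[hx hg] _]].
  by apply: ht; rewrite -hg; apply: hgs hp hx.
- move=> t; apply: norm_Lc => p' /List.in_map_iff [p [<- hp]] /=.
  have [hpo [hpc _]] := hl p hp.
  by apply: (TcI_Rg hphi t)...
- apply functional_extensionality => ga; rewrite /Psi /a /lsum big_map /=.
  apply: eq_bigr => p _; congr (_ * _); apply: indic_ext.
  have := Bg_Rg hphi (grade ga) (fun ga' => p.2 ga' /\ grade ga' = grade ga) ga.
  rewrite /Bg => -[h1 h2]; split.
  + by move=> hx; have [[]] := h1 (conj erefl hx).
  + by move=> hx; have [] := h2 (conj (conj hx erefl) erefl).
Qed.

Lemma psi_add a b : Psi (Ladd a b) = Aadd (Psi a) (Psi b).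
Proof. by []. Qed.
Lemma psi_scale r a : Psi (Lscale r a) = Ascale r (Psi a).
Proof. by []. Qed.
End Main.


Section Prod.
Variable S : invsemigroup.
Variable G : group.
Variable phi : S -> G.
Hypothesis hphi : pure_grading phi.
Local Notation "a ** b" := (@smul S a b) (at level 40, left associativity).
Local Notation "s ^*" := (@sstar S s).
Local Notation z := (@szero S).
Local Notation "a * b" := (@gmul G a b).
Local Notation inv := (@ginv G).
Local Notation grade := (grade phi).
Local Notation grade_mem := (grade_mem hphi).
Local Notation grade_mkg := (grade_mkg hphi).
Local Notation germ_inj_rng := (germ_inj_rng hphi).
Local Notation germ_inj_src := (germ_inj_src hphi).
Local Notation germ_exists := (germ_exists hphi).
Local Notation rng_Dg := (rng_Dg hphi).

Lemma thetas_comp (s t : S) (eta : Filt S) : is_filter eta -> eta (t^* ** t) ->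
  thetas t eta (s^* ** s) -> thetas s (thetas t eta) = thetas (s ** t) eta.
Proof.
move=> hF ht hs.
have hT := thetas_filter hF ht.
have hst : eta ((s ** t)^* ** (s ** t)).
  have /(thetasP _ hF ht) [_] := hs; rewrite /cj star_mul.
  by have -> : t^* ** s^* ** (s ** t) = t^* ** (s^* ** s) ** t by rewrite !mA.
apply: predext => y; rewrite (thetasP _ hT hs) (thetasP _ hF hst); split.
- case=> hy /(thetasP _ hF ht) [_ h]; split => //; move: h; rewrite /cj star_mul.
  by have -> : t^* ** s^* ** y ** (s ** t) = t^* ** (s^* ** y ** s) ** t by rewrite !mA.
- case=> hy h; split => //; apply/(thetasP _ hF ht); split; first exact: idem_cj.
  move: h; rewrite /cj star_mul.
  by have -> : t^* ** s^* ** y ** (s ** t) = t^* ** (s^* ** y ** s) ** t by rewrite !mA.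
Qed.

Lemma gprod_facts (al be ga : germ S) : gprod al be ga ->
  rng al = rng ga /\ src al = rng be /\ src be = src ga /\ grade ga = grade al * grade be.
Proof.
move=> [s [t [eta [hb [ha hc]]]]].
have [htt htm] := germ_mem_isgerm hb; rewrite /= in htt htm.
have [_ hsm] := germ_mem_isgerm ha; rewrite /= in hsm.
have hg := germ_mem_isgerm hc.
split.
  rewrite (rng_mem ha) (rng_mem hc) /=; apply: thetas_comp => //; exact: tight_filter.
split; first by rewrite (src_mem ha) (rng_mem hb).
split; first by rewrite (src_mem hb) (src_mem hc).
rewrite (grade_mem hc) (grade_mem ha) (grade_mem hb) /=.
apply: phiM => //; exact: germ_ne0 hg.
Qed.

Lemma gprod_uniq (al be al' be' ga : germ S) : gprod al be ga -> gprod al' be' ga ->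
  grade al = grade al' -> al = al' /\ be = be'.
Proof.
move=> h1 h2 e.
have [r1 [s1 [t1 g1]]] := gprod_facts h1; have [r2 [s2 [t2 g2]]] := gprod_facts h2.
split; first by apply: germ_inj_rng => //; rewrite r1 r2.
apply: germ_inj_src; last by rewrite t1 t2.
by apply: (@gcancl G (grade al)); rewrite -g1 e -g2.
Qed.

Lemma gprod_exists (al be : germ S) : src al = rng be ->
  exists ga, gprod al be ga /\ grade ga = grade al * grade be /\ rng ga = rng al.
Proof.
move=> e.
have ha := rep_mem al; case Ea: (rep al) ha => [s xi] ha.
have hb := rep_mem be; case Eb: (rep be) hb => [u om] hb.
rewrite (src_mem ha) (rng_mem hb) /= in e.
have [hot hou] := germ_mem_isgerm hb; rewrite /= in hot hou.
have [hxt hxs] := germ_mem_isgerm ha; rewrite /= in hxt hxs.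
have hoF := tight_filter hot.
have hp : isgerm (s ** u, om).
  split => //=; rewrite star_mul.
  have : thetas u om (s^* ** s) by rewrite -e.
  move/(thetasP _ hoF hou) => [_]; rewrite /cj.
  by have -> : u^* ** (s^* ** s) ** u = u^* ** s^* ** (s ** u) by rewrite !mA.
exists (mkg hp); split.
  exists s, u, om; split => //; split; first by rewrite -e.
  exact: mkg_mem.
split.
  rewrite grade_mkg (grade_mem ha) (grade_mem hb) /=; apply: phiM => //; exact: germ_ne0 hp.
rewrite rng_mkg (rng_mem ha) /= e; symmetry; apply: thetas_comp => //.
by rewrite -e.
Qed.

Lemma theta_germ (al : germ S) :
  theta phi (inv (grade al)) (rng al) = src al /\ Dg phi (inv (grade al)) (src al) /\
  theta phi (grade al) (src al) = rng al.
Proof.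
have ha := rep_mem al; case Ea: (rep al) ha => [s xi] ha.
have hg := germ_mem_isgerm ha.
have hi := isgerm_inv hg.
have hs0 := germ_ne0 hg; rewrite /= in hs0.
have [ht hs] := hg; rewrite /= in ht hs.
rewrite (grade_mem ha) (rng_mem ha) (src_mem ha) /=.
split.
  rewrite -(phi_star hphi hs0) (theta_eq hphi hi) /=; exact: thetas_inv (tight_filter ht) hs.
split.
  apply/Dg_char; split => //; exists (s^*); split; first exact: ne0_star.
  by rewrite phi_star // starK.
have := theta_eq hphi hg. done.
Qed.
End Prod.


Lemma In_pmap (A B : Type) (f : A -> option B) (l : seq A) q :
  List.In q (pmap f l) <-> exists x, List.In x l /\ f x = Some q.
Proof.
elim: l => [|x l IH] /=; first by split => // [[? []]].
case E: (f x) => [y|] /=.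
- rewrite IH; split.
  + by case=> [<-|[x' [h1 h2]]]; [exists x; split; [left|] | exists x'; split; [right|]].
  + case=> x' [[<-|h1] h2]; first by left; rewrite E in h2; case: h2.
    by right; exists x'.
- rewrite IH; split.
  + by case=> x' [h1 h2]; exists x'; split; [right|].
  + case=> x' [[<-|h1] h2]; first by rewrite E in h2.
    by exists x'.
Qed.

Lemma NoDup_pmap (A B : Type) (f : A -> option B) (l : seq A) :
  List.NoDup l -> (forall x y q, List.In x l -> List.In y l -> f x = Some q -> f y = Some q -> x = y) ->
  List.NoDup (pmap f l).
Proof.
elim: l => [|x l IH] /=; first by constructor.
move=> /List.NoDup_cons_iff [hx hl] h.
have IH' := IH hl (fun x' y' q h1 h2 => h x' y' q (or_intror h1) (or_intror h2)).
case E: (f x) => [y|] //=.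
constructor => //.
move/In_pmap => [x' [h1 h2]].
have e : x = x' by apply: (h x x' y); [left | right | |].
by apply: hx; rewrite e.
Qed.

Lemma sum_pmap (A B : Type) (V : zmodType) (f : A -> option B) (F : B -> V) (l : seq A) :
  \sum_(q <- pmap f l) F q = \sum_(x <- l) (match f x with Some q => F q | None => 0 end).
Proof.
elim: l => [|x l IH] /=; first by rewrite !big_nil.
rewrite big_cons; case: (f x) => [y|] /=; by rewrite ?big_cons IH ?add0r.
Qed.

Lemma NoDup_map_inj (A B : Type) (f : A -> B) (l : seq A) :
  (forall x y, f x = f y -> x = y) -> List.NoDup l -> List.NoDup (map f l).
Proof.
move=> hf; elim: l => [|x l IH] /=; first by constructor.
move=> /List.NoDup_cons_iff [hx hl]; constructor; last exact: IH.
by move/List.in_map_iff => [y [e hy]]; apply: hx; rewrite -(hf _ _ e).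
Qed.

Section Mul.
Variable S : invsemigroup.
Variable G : group.
Variable phi : S -> G.
Hypothesis hphi : pure_grading phi.
Variable R : comPzRingType.
Local Notation "a *g b" := (@gmul G a b) (at level 40, left associativity).
Local Notation inv := (@ginv G).
Local Notation grade := (grade phi).
Local Notation germ_inj_rng := (germ_inj_rng hphi).
Local Notation germ_exists := (germ_exists hphi).
Local Notation rng_Dg := (rng_Dg hphi).

Lemma act_zero t (xi : Filt S) : act phi t (fun _ => 0 : R) xi = 0.
Proof. by rewrite /act; case: excluded_middle_informative. Qed.

Lemma psi_mul (a b : G -> Filt S -> R) : inL phi a -> inL phi b ->
  Psi phi (Lmul phi a b) = Aconv (Psi phi a) (Psi phi b).
Proof.
move=> [[ts0 hts0] ha] [_ hb].
have [TS [hnd hTS]] := NoDup_exists ts0.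
have ha0 : forall t, ~ List.In t TS -> a t = (fun _ => 0).
  by move=> t ht; apply: hts0 => /hTS.
apply functional_extensionality => ga.
set g := grade ga; set eta0 := rng ga.
pose T1 := fun t => act phi t (fun eta => act phi (inv t) (a t) eta * b (inv t *g g) eta) eta0.
have step1 : Psi phi (Lmul phi a b) ga = \sum_(t <- TS) T1 t.
  rewrite /Psi /Lmul -/g -/eta0.
  rewrite (fsumE (l := [seq (t, inv t *g g) | t <- TS])).
  - rewrite big_map; apply: eq_bigr => t _ /=.
    case: excluded_middle_informative => // hn; case: hn; exact: gKr.
  - by apply: NoDup_map_inj => // x y [].
  - case=> p1 p2 /=; case: excluded_middle_informative => // e hne.
    apply/List.in_map_iff; exists p1; split; first by rewrite -e gKl.
    apply: NNPP => hn; apply: hne; rewrite ha0 //.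
    have -> : (fun eta => act phi (inv p1) (fun _ => 0 : R) eta * b p2 eta) = (fun _ => 0).
      by apply functional_extensionality => eta; rewrite act_zero mul0r.
    exact: act_zero.
pose P := fun t => exists q : germ S * germ S, gprod q.1 q.2 ga /\ grade q.1 = t.
pose opair := fun t => match excluded_middle_informative (P t) with
  | left H => Some (proj1_sig (constructive_indefinite_description _ H))
  | right _ => None end.
have opS : forall t q, opair t = Some q -> gprod q.1 q.2 ga /\ grade q.1 = t.
  move=> t q; rewrite /opair; case: excluded_middle_informative => // H [<-].
  by case: constructive_indefinite_description.
have opN : forall t, opair t = None -> ~ P t.
  by move=> t; rewrite /opair; case: excluded_middle_informative.
pose F2 := fun q : germ S * germ S =>
  if excluded_middle_informative (gprod q.1 q.2 ga) then Psi phi a q.1 * Psi phi b q.2 else 0.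
have step2 : Aconv (Psi phi a) (Psi phi b) ga = \sum_(t <- TS)
    (match opair t with Some q => F2 q | None => 0 end).
  rewrite /Aconv -/F2 (fsumE (l := pmap opair TS)); first by rewrite sum_pmap.
  - apply: NoDup_pmap => // x y q _ _ h1 h2.
    by have [_ <-] := opS _ _ h1; have [_ <-] := opS _ _ h2.
  - move=> q hq; apply/In_pmap.
    have hg : gprod q.1 q.2 ga by move: hq; rewrite /F2; case: excluded_middle_informative.
    have hin : List.In (grade q.1) TS.
      apply: NNPP => hn; apply: hq; rewrite /F2 /Psi ha0 //.
      by case: excluded_middle_informative => hh; rewrite ?mul0r.
    exists (grade q.1); split => //.
    case E: (opair (grade q.1)) => [q'|].
    + have [hg' eg'] := opS _ _ E.
      have [e1 e2] := gprod_uniq hphi hg' hg eg'.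
      by rewrite (surjective_pairing q') (surjective_pairing q) e1 e2.
    + by case: (opN _ E); exists q.
rewrite step1 step2; apply: eq_bigr => t _.
rewrite /T1 /act; case: excluded_middle_informative => hD /=; last first.
  case E: (opair t) => [q|] //.
  have [hg eg] := opS _ _ E; have [r1 _] := gprod_facts hphi hg.
  by case: hD; rewrite -eg /eta0 -r1; apply: rng_Dg.
have [al [hal1 hal2]] := germ_exists hD.
have [th1 [th2 th3]] := theta_germ hphi al.
rewrite hal1 hal2 in th1 th2 th3.
rewrite th1; case: excluded_middle_informative => // hh /=.
rewrite ginvK th3.
case E: (opair t) => [q|].
- have [hg eg] := opS _ _ E.
  have [r1 [s1 [_ g1]]] := gprod_facts hphi hg.
  have eal : q.1 = al by apply: germ_inj_rng; rewrite ?eg ?hal1 // r1 hal2.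
  rewrite /F2; case: excluded_middle_informative => // hh2 /=.
  rewrite /Psi eg eal hal2; congr (_ * _).
  have -> : grade q.2 = inv t *g g by rewrite /g g1 eg gKl.
  by rewrite -s1 eal.
- have -> : b (inv t *g g) (src al) = 0; last by rewrite mulr0.
  apply: NNPP => hne; apply: (opN _ E).
  have hD2 : Dg phi (inv t *g g) (src al).
    by apply: NNPP => hn; apply: hne; apply: inLc_zero (hb _) hn.
  have [be [hbe1 hbe2]] := germ_exists hD2.
  have [ga' [hg' [hg2 hr2]]] := gprod_exists hphi (esym hbe2).
  have ega : ga' = ga.
    apply: germ_inj_rng; last by rewrite hr2 hal2.
    by rewrite hg2 hal1 hbe1 gKr.
  exists (al, be); split => //; by rewrite -ega.
Qed.
End Mul.


Unset Implicit Arguments.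
Theorem mainTheorem15 (S : invsemigroup) (G : group) (phi : S -> G)
    (R : comPzRingType) :
  pure_grading phi ->
  exists Psi : (G -> Filt S -> R) -> (germ S -> R),
    (forall a, inL phi a -> inSteinberg (Psi a)) /\
    (forall a b, inL phi a -> inL phi b -> Psi a = Psi b -> a = b) /\
    (forall f, inSteinberg f -> exists a, inL phi a /\ Psi a = f) /\
    (forall a b, inL phi a -> inL phi b ->
       Psi (Ladd a b) = Aadd (Psi a) (Psi b)) /\
    (forall r a, inL phi a -> Psi (Lscale r a) = Ascale r (Psi a)) /\
    (forall a b, inL phi a -> inL phi b ->
       Psi (Lmul phi a b) = Aconv (Psi a) (Psi b)).
Proof.
move=> hphi; exists (@Psi S G phi R).
split; first by move=> a ha; exact: (psi_stein hphi ha).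
split; first by move=> a b ha hb e; exact: (psi_inj hphi ha hb e).
split; first by move=> f hf; exact: (psi_surj hphi hf).
split; first by [].
split; first by [].
move=> a b ha hb; exact: (psi_mul hphi ha hb).
Qed.
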